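(* Let $N\ge3$ and suppose $\boldsymbol{\mathfrak h}\notin\mathrm{col}(C)$. Consider the optimization problem: maximize $\boldsymbol{\mathfrak b}\cdot\boldsymbol{\mathfrak h}$ over $\boldsymbol{\mathfrak b}\in\mathbb{R}^N$ subject to $\|\boldsymbol{\mathfrak b}\|_\infty\le1$ and $\boldsymbol{\mathfrak b}\perp\mathrm{col}(C)$. Then its optimal value equals $\min_{\mathbf v\in\mathrm{col}(C)}\|\boldsymbol{\mathfrak h}-\mathbf v\|_1 = 2\min_{S\in\mathfrak{S}}\|H-S\|$ (operator norm). Moreover, if $\boldsymbol{\mathfrak b}^\diamond$ is an optimal solution and $\boldsymbol\theta=\tfrac12\arccos\boldsymbol{\mathfrak b}^\diamond$ (entrywise), then the dephasing code associated with $\boldsymbol\theta$ satisfies $PSP\in\mathbb{R}P$ for all $S\in\mathfrak{S}$, $\langle0_L|H|1_L\rangle=0$, and $\langle0_L|H|0_L\rangle-\langle1_L|H|1_L\rangle=\boldsymbol{\mathfrak h}\cdot\boldsymbol{\mathfrak b}^\diamond=\min_{\mathbf v\in\mathrm{col}(C)}\|\boldsymbol{\mathfrak h}-\mathbf v\|_1>0$. Hence the state $\tfrac1{\sqrt2}(|0_L\rangle+|1_L\rangle)$ evolving under $\omega PHP$ for time $t$ has quantum Fisher information $t^2\min_{\mathbf v\in\mathrm{col}(C)}\|\boldsymbol{\mathfrak h}-\mathbf v\|_1^2=4t^2\min_{S\in\mathfrak S}\|H-S\|^2$.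
   Context: Qubits $1,\dots,N$; $Z_j$, $X_j$ denote the Pauli $Z$, $X$ operators on qubit $j$ of $(\mathbb{C}^2)^{\otimes N}$. For $\mathbf v\in\mathbb{R}^N$, $\mathbf v\cdot\mathbf Z:=\sum_j v_jZ_j$. Dephasing model: $\boldsymbol{\mathfrak h}\in\mathbb{R}^N$, $H=\tfrac12\boldsymbol{\mathfrak h}\cdot\mathbf Z$; $C$ is a real symmetric positive semidefinite $N\times N$ matrix with orthonormal eigenvectors $\mathbf v_1,\dots,\mathbf v_N$ and eigenvalues $\lambda_1,\dots,\lambda_N\ge0$; $L_j=\sqrt{\lambda_j}\,\mathbf v_j\cdot\mathbf Z$; $\mathrm{col}(C)$ is the column space of $C$; the Lindblad span $\mathfrak{S}$ is the real span of $I$, all $L_i$ and all $L_iL_j$. Dephasing code for $\boldsymbol\theta\in\mathbb{R}^N$: $|0_L\rangle=\bigotimes_{j=1}^N(\cos\theta_j|0\rangle+i\sin\theta_j|1\rangle)$, $|1_L\rangle=X^{\otimes N}|0_L\rangle$, $P=|0_L\rangle\langle0_L|+|1_L\rangle\langle1_L|$. $\|\cdot\|_1,\|\cdot\|_\infty$ are the $\ell^1$ and max norms on $\mathbb{R}^N$. For a pure state $|\psi\rangle$ under Hamiltonian $\omega K$ for time $t$, the quantum Fisher information is $4t^2(\langle\psi|K^2|\psi\rangle-\langle\psi|K|\psi\rangle^2)$. *)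

(* Defs.v *)
From Stdlib Require Import Reals Lra.
Open Scope R_scope.

Definition C := (R * R)%type.
Definition RtoC (x : R) : C := (x, 0).
Definition C0 : C := (0, 0).
Definition C1 : C := (1, 0).
Definition Ci : C := (0, 1).
Definition Cadd (a b : C) : C := (fst a + fst b, snd a + snd b).
Definition Copp (a : C) : C := (- fst a, - snd a).
Definition Csub (a b : C) : C := Cadd a (Copp b).
Definition Cmul (a b : C) : C :=
  (fst a * fst b - snd a * snd b, fst a * snd b + snd a * fst b).
Definition Cconj (a : C) : C := (fst a, - snd a).
Definition Cnorm2 (a : C) : R := fst a ^ 2 + snd a ^ 2.

Fixpoint Rsum (n : nat) (f : nat -> R) : R :=
  match n with O => 0 | S m => Rsum m f + f m end.
Fixpoint Csum (n : nat) (f : nat -> C) : C :=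
  match n with O => C0 | S m => Cadd (Csum m f) (f m) end.
Fixpoint Cprodn (n : nat) (f : nat -> C) : C :=
  match n with O => C1 | S m => Cmul (Cprodn m f) (f m) end.

(* ---------- N-qubit Hilbert space (C^2)^{⊗N} ≅ C^(2^N) ----------
   Basis index k < 2^N; bit j of k (Nat.testbit k j) is the value of qubit j
   (qubits are numbered 0 .. N-1). Vectors / operators are functions on
   indices; only indices < 2^N are meaningful. *)
Definition dim (N : nat) : nat := (2 ^ N)%nat.
Definition Vec := nat -> C.
Definition Op := nat -> nat -> C.

Definition opApply (N : nat) (A : Op) (v : Vec) : Vec :=
  fun i => Csum (dim N) (fun k => Cmul (A i k) (v k)).
Definition opMul (N : nat) (A B : Op) : Op :=
  fun i k => Csum (dim N) (fun m => Cmul (A i m) (B m k)).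
Definition opAdd (A B : Op) : Op := fun i k => Cadd (A i k) (B i k).
Definition opSub (A B : Op) : Op := fun i k => Csub (A i k) (B i k).
Definition opScale (c : C) (A : Op) : Op := fun i k => Cmul c (A i k).
Definition opId : Op := fun i k => if Nat.eqb i k then C1 else C0.

Definition inner (N : nat) (u v : Vec) : C :=
  Csum (dim N) (fun k => Cmul (Cconj (u k)) (v k)).
Definition braket (N : nat) (u : Vec) (A : Op) (v : Vec) : C :=
  inner N u (opApply N A v).
Definition vnorm (N : nat) (v : Vec) : R :=
  sqrt (Rsum (dim N) (fun k => Cnorm2 (v k))).

Definition OpNorm (N : nat) (A : Op) (r : R) : Prop :=
  is_lub (fun y => exists psi : Vec, vnorm N psi = 1 /\ y = vnorm N (opApply N A psi)) r.

Definition PauliZ (j : nat) : Op :=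
  fun i k => if Nat.eqb i k then (if Nat.testbit i j then RtoC (-1) else C1) else C0.
(* X^{⊗N} flips all N bits: |i> |-> |2^N-1-i> *)
Definition Xall (N : nat) : Op :=
  fun i k => if Nat.eqb k (dim N - 1 - i)%nat then C1 else C0.

Definition dotZ (N : nat) (v : nat -> R) : Op :=
  fun i k => Csum N (fun j => Cmul (RtoC (v j)) (PauliZ j i k)).

Definition Hmain (N : nat) (h : nat -> R) : Op := opScale (RtoC (1 / 2)) (dotZ N h).

(* L_j = sqrt(lambda_j) v_j . Z ; vv j is the j-th eigenvector of C *)
Definition Lind (N : nat) (lam : nat -> R) (vv : nat -> nat -> R) (j : nat) : Op :=
  opScale (RtoC (sqrt (lam j))) (dotZ N (vv j)).

Definition spanElt (N : nat) (lam : nat -> R) (vv : nat -> nat -> R)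
  (c0 : R) (c1 : nat -> R) (c2 : nat -> nat -> R) : Op :=
  fun i k =>
    Cadd (Cmul (RtoC c0) (opId i k))
      (Cadd (Csum N (fun a => Cmul (RtoC (c1 a)) (Lind N lam vv a i k)))
            (Csum N (fun a => Csum N (fun b =>
               Cmul (RtoC (c2 a b)) (opMul N (Lind N lam vv a) (Lind N lam vv b) i k))))).

Definition InSpan (N : nat) (lam : nat -> R) (vv : nat -> nat -> R) (S : Op) : Prop :=
  exists c0 c1 c2, S = spanElt N lam vv c0 c1 c2.

Definition zeroL (N : nat) (theta : nat -> R) : Vec :=
  fun k => Cprodn N (fun j =>
    if Nat.testbit k j then Cmul Ci (RtoC (sin (theta j))) else RtoC (cos (theta j))).
Definition oneL (N : nat) (theta : nat -> R) : Vec := opApply N (Xall N) (zeroL N theta).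
Definition projP (N : nat) (theta : nat -> R) : Op :=
  fun i k => Cadd (Cmul (zeroL N theta i) (Cconj (zeroL N theta k)))
                  (Cmul (oneL N theta i) (Cconj (oneL N theta k))).
Definition plusL (N : nat) (theta : nat -> R) : Vec :=
  fun k => Cmul (RtoC (1 / sqrt 2)) (Cadd (zeroL N theta k) (oneL N theta k)).

Definition QFI (N : nat) (t : R) (K : Op) (psi : Vec) : C :=
  Cmul (RtoC (4 * t ^ 2))
    (Csub (braket N psi (opMul N K K) psi) (Cmul (braket N psi K psi) (braket N psi K psi))).

Definition rdot (N : nat) (a b : nat -> R) : R := Rsum N (fun i => a i * b i).
Definition l1dist (N : nat) (a b : nat -> R) : R := Rsum N (fun i => Rabs (a i - b i)).
Definition inCol (N : nat) (Cm : nat -> nat -> R) (w : nat -> R) : Prop :=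
  exists x : nat -> R, forall i, (i < N)%nat -> w i = Rsum N (fun k => Cm i k * x k).
Definition Feasible (N : nat) (Cm : nat -> nat -> R) (b : nat -> R) : Prop :=
  (forall i, (i < N)%nat -> Rabs (b i) <= 1) /\
  (forall w, inCol N Cm w -> rdot N b w = 0).

Definition IsMaxOf (P : R -> Prop) (x : R) : Prop := P x /\ forall y, P y -> y <= x.
Definition IsMinOf (P : R -> Prop) (x : R) : Prop := P x /\ forall y, P y -> x <= y.

(* Main.v *)
From Stdlib Require Import Reals Lra Lia List Arith Ring.
Require Import Defs.
Import ListNotations.
Open Scope R_scope.

Module Spec.
From mathcomp Require Import all_boot all_algebra.
From mathcomp Require Import Rstruct.
Import GRing.Theory.
Local Open Scope ring_scope.

Lemma big_Rsum n (f : nat -> R) : (\sum_(i < n) f i)%R = Rsum n f.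
Proof.
  elim: n => [|n IH]; first by rewrite big_ord0.
  by rewrite big_ord_recr /= IH.
Qed.

Lemma complete_mx N (vv : nat -> nat -> R) :
  (forall a b, lt a N -> lt b N -> rdot N (vv a) (vv b) = if Nat.eqb a b then R1 else R0) ->
  forall i j, lt i N -> lt j N -> Rsum N (fun a => Rmult (vv a i) (vv a j)) = if Nat.eqb i j then R1 else R0.
Proof.
  move=> Horth i j Hi Hj.
  pose V := (\matrix_(a < N, k < N) vv a k : 'M[R]_N).
  have H1 : (V *m V^T = 1%:M)%R.
  { apply/matrixP => a b. rewrite !mxE.
    rewrite (eq_bigr (fun k : 'I_N => vv a k * vv b k)); last by move=> k _; rewrite !mxE.
    rewrite (big_Rsum N (fun k => vv a k * vv b k)). have := Horth a b (elimT ltP (ltn_ord a)) (elimT ltP (ltn_ord b)). rewrite /rdot => ->.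
    case: (Nat.eqb_spec a b) => E.
    - have E' : a = b by apply: val_inj.
      rewrite E'. have -> : (b == b) = true by apply/eqP. reflexivity.
    - have E' : (a == b) = false.
      { apply/negP => /eqP E2. apply: E. by rewrite E2. }
      rewrite E'. reflexivity. }
  have H2 := mulmx1C H1.
  have := congr1 (fun M : 'M[R]_N => M (Ordinal (introT ltP Hi)) (Ordinal (introT ltP Hj))) H2.
  rewrite /= !mxE.
  rewrite (eq_bigr (fun a : 'I_N => vv a i * vv a j)); last by move=> a _; rewrite !mxE.
  rewrite (big_Rsum N (fun a => vv a i * vv a j)) => ->.
  case: (Nat.eqb_spec i j) => E.
  - subst j. have -> : (Ordinal (introT ltP Hi) == Ordinal (introT ltP Hj)) = true by apply/eqP; apply: val_inj.
    reflexivity.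
  - have E' : (Ordinal (introT ltP Hi) == Ordinal (introT ltP Hj)) = false.
    { apply/negP => /eqP E2. apply: E. by case: E2. }
    rewrite E'. reflexivity.
Qed.
End Spec.

Set Bullet Behavior "Strict Subproofs".

Lemma Rsum_ext n f g : (forall i, (i < n)%nat -> f i = g i) -> Rsum n f = Rsum n g.
Proof. induction n; simpl; intros H; auto. rewrite IHn by (intros; apply H; lia). rewrite H by lia; auto. Qed.

Lemma Rsum_add n f g : Rsum n (fun i => f i + g i) = Rsum n f + Rsum n g.
Proof. induction n; simpl; [lra|]. rewrite IHn; lra. Qed.

Lemma Rsum_scal n c f : Rsum n (fun i => c * f i) = c * Rsum n f.
Proof. induction n; simpl; [lra|]. rewrite IHn; lra. Qed.

Lemma Rsum_opp n f : Rsum n (fun i => - f i) = - Rsum n f.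
Proof. induction n; simpl; [lra|]. rewrite IHn; lra. Qed.

Lemma Rsum_sub n f g : Rsum n (fun i => f i - g i) = Rsum n f - Rsum n g.
Proof. induction n; simpl; [lra|]. rewrite IHn; lra. Qed.

Lemma Rsum_zero n f : (forall i, (i < n)%nat -> f i = 0) -> Rsum n f = 0.
Proof. induction n; simpl; intros H; auto. rewrite IHn, H by (intros; try apply H; lia). lra. Qed.

Lemma Rsum_le n f g : (forall i, (i < n)%nat -> f i <= g i) -> Rsum n f <= Rsum n g.
Proof. induction n; simpl; intros H; [lra|]. assert (H1 := H n ltac:(lia)). assert (Rsum n f <= Rsum n g) by (apply IHn; intros; apply H; lia). lra. Qed.

Lemma Rsum_nonneg n f : (forall i, (i < n)%nat -> 0 <= f i) -> 0 <= Rsum n f.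
Proof. intros H. replace 0 with (Rsum n (fun _ => 0)). apply Rsum_le; auto. apply Rsum_zero; auto. Qed.

Lemma Rsum_swap n m f : Rsum n (fun i => Rsum m (fun j => f i j)) = Rsum m (fun j => Rsum n (fun i => f i j)).
Proof. induction n; simpl. rewrite Rsum_zero; auto. rewrite IHn, <- Rsum_add. auto. Qed.

Lemma Rsum_abs n f : Rabs (Rsum n f) <= Rsum n (fun i => Rabs (f i)).
Proof. induction n; simpl. rewrite Rabs_R0; lra. eapply Rle_trans. apply Rabs_triang. lra. Qed.

Lemma Rsum_plus a b f : Rsum (a + b) f = Rsum a f + Rsum b (fun k => f (a + k)%nat).
Proof. induction b; simpl. rewrite Nat.add_0_r; lra. rewrite Nat.add_succ_r. simpl. rewrite IHb. lra. Qed.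

Lemma Rsum_single n k f : (k < n)%nat -> (forall i, (i < n)%nat -> i <> k -> f i = 0) -> Rsum n f = f k.
Proof. induction n; intros Hk H; [lia|]. simpl. destruct (Nat.eq_dec k n).
 - subst. rewrite Rsum_zero. lra. intros; apply H; lia.
 - rewrite IHn by (try lia; intros; apply H; lia). rewrite (H n) by lia. lra. Qed.

Lemma Rsum_shift n f : Rsum (S n) f = f O + Rsum n (fun k => f (S k)).
Proof. replace (S n) with (1 + n)%nat by lia. rewrite Rsum_plus. simpl. lra. Qed.

Lemma Rsum_rev n f : Rsum n (fun k => f (n - 1 - k)%nat) = Rsum n f.
Proof. induction n; auto.
 rewrite Rsum_shift. simpl (S n - 1 - 0)%nat. rewrite Nat.sub_0_r.
 rewrite (Rsum_ext n (fun k => f (S n - 1 - S k)%nat) (fun k => f (n - 1 - k)%nat)) by (intros; f_equal; lia).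
 rewrite IHn. simpl. rewrite Nat.sub_0_r. lra. Qed.

Lemma Rdiv_le_0_compat a b : 0 <= a -> 0 < b -> 0 <= a / b.
Proof. intros. unfold Rdiv. apply Rmult_le_pos; auto. left; apply Rinv_0_lt_compat; auto. Qed.

Section OneD.
Variable A : Type.
Variable Bs : list A.
Variables al s : A -> R.
Definition ell b t := al b - t * s b.
Definition active b t := forall b', In b' Bs -> ell b' t <= ell b t.
Hypothesis Hact : forall t, exists b, In b Bs /\ active b t /\ 0 <= ell b t.

Lemma argmin_list (L : list A) (f : A -> R) : L <> nil -> exists x, In x L /\ forall y, In y L -> f x <= f y.
Proof.
  induction L as [|a L IH]; intros Hn; [congruence|].
  destruct L as [|c L'].
  - exists a; split; [left; auto|]. intros y [<-|[]]; lra.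
  - destruct IH as [x [Hx Hm]]; [congruence|].
    destruct (Rle_dec (f a) (f x)).
    + exists a; split; [left; auto|]. intros y [<-|Hy]; [lra|]. specialize (Hm y Hy); lra.
    + exists x; split; [right; auto|]. intros y [<-|Hy]; [lra|]. auto.
Qed.

Definition ltb_s (c : R) (b : A) : bool := if Rlt_dec (s b) c then true else false.

Lemma filter_length_le (L : list A) (p q : A -> bool) :
  (forall y, In y L -> p y = true -> q y = true) ->
  (length (filter p L) <= length (filter q L))%nat.
Proof.
  induction L as [|a L IH]; intros Hpq; simpl; auto.
  assert (H1 : forall y, In y L -> p y = true -> q y = true) by (intros; apply Hpq; simpl; auto).
  specialize (IH H1). destruct (p a) eqn:E.
  - rewrite (Hpq a) by (simpl; auto). simpl; lia.
  - destruct (q a); simpl; lia.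
Qed.

Lemma filter_length_lt (L : list A) (p q : A -> bool) (x : A) :
  (forall y, In y L -> p y = true -> q y = true) -> In x L -> q x = true -> p x = false ->
  (length (filter p L) < length (filter q L))%nat.
Proof.
  induction L as [|a L IH]; intros Hpq Hx Hq Hp; [destruct Hx|].
  simpl. destruct Hx as [<-|Hx].
  - rewrite Hp, Hq. simpl.
    assert (length (filter p L) <= length (filter q L))%nat.
    { apply filter_length_le. intros; apply Hpq; simpl; auto. }
    lia.
  - assert (H1 : forall y, In y L -> p y = true -> q y = true) by (intros; apply Hpq; simpl; auto).
    specialize (IH H1 Hx Hq Hp). destruct (p a) eqn:E.
    + rewrite (Hpq a) by (simpl; auto). simpl; lia.
    + destruct (q a); simpl; lia.
Qed.

Definition goal1D := exists t b1 b2, In b1 Bs /\ In b2 Bs /\ 0 <= s b1 /\ s b2 <= 0 /\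
   active b1 t /\ ell b2 t = ell b1 t.

Lemma oneD_pos_aux : forall k t0 b0, In b0 Bs -> active b0 t0 -> 0 < s b0 ->
  (length (filter (ltb_s (s b0)) Bs) <= k)%nat -> goal1D.
Proof.
  induction k as [k IHk] using (well_founded_induction Wf_nat.lt_wf).
  intros t0 b0 Hb0 Ha0 Hs0 Hlen.
  destruct (filter (ltb_s (s b0)) Bs) as [|c L] eqn:EL.
  - (* all slopes >= s b0 : contradiction *)
    exfalso.
    set (T := t0 + (ell b0 t0 + 1) / s b0 + (Rabs (ell b0 t0) + 1) / s b0).
    destruct (Hact T) as [b [Hb [HaT HpT]]].
    assert (Hsb : s b0 <= s b).
    { destruct (Rlt_dec (s b) (s b0)) as [Hl|Hl]; [|lra].
      assert (In b (filter (ltb_s (s b0)) Bs)) by (apply filter_In; split; auto; unfold ltb_s; destruct (Rlt_dec (s b) (s b0)); auto; lra).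
      rewrite EL in H; destruct H. }
    assert (Hlb := Ha0 b Hb). unfold ell in *.
    assert (HT : 0 <= T - t0).
    { unfold T. assert (0 <= (Rabs (al b0 - t0 * s b0) + 1) / s b0) by (apply Rdiv_le_0_compat; [generalize (Rabs_pos (al b0 - t0 * s b0)); lra | lra]).
      assert ((al b0 - t0 * s b0 + 1) / s b0 + (Rabs (al b0 - t0 * s b0) + 1) / s b0 = (al b0 - t0 * s b0 + 1 + Rabs (al b0 - t0 * s b0) + 1) / s b0) by (field; lra).
      assert (0 <= (al b0 - t0 * s b0 + 1 + Rabs (al b0 - t0 * s b0) + 1) / s b0).
      { apply Rdiv_le_0_compat; [|lra]. generalize (Rabs_pos (al b0 - t0 * s b0)) (Rle_abs (-(al b0 - t0 * s b0))). rewrite Rabs_Ropp. lra. }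
      lra. }
    assert (al b - T * s b <= al b0 - T * s b0).
    { replace (al b - T * s b) with ((al b - t0 * s b) - (T - t0) * s b) by ring.
      replace (al b0 - T * s b0) with ((al b0 - t0 * s b0) - (T - t0) * s b0) by ring.
      assert ((T - t0) * s b0 <= (T - t0) * s b) by (apply Rmult_le_compat_l; lra). lra. }
    assert (al b0 - T * s b0 < 0).
    { unfold T. 
      replace (al b0 - (t0 + (al b0 - t0 * s b0 + 1) / s b0 + (Rabs (al b0 - t0 * s b0) + 1) / s b0) * s b0)
        with (-1 - (Rabs (al b0 - t0 * s b0) + 1)) by (field; lra).
      generalize (Rabs_pos (al b0 - t0 * s b0)); lra. }
    lra.
  - set (L0 := filter (ltb_s (s b0)) Bs).
    set (tau := fun b => t0 + (ell b0 t0 - ell b t0) / (s b0 - s b)).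
    destruct (argmin_list L0 tau) as [b1 [Hb1 Hm]]. { unfold L0; rewrite EL; congruence. }
    unfold L0 in Hb1. apply filter_In in Hb1. destruct Hb1 as [Hb1 Hl1].
    assert (Hs1 : s b1 < s b0) by (unfold ltb_s in Hl1; destruct (Rlt_dec (s b1) (s b0)); [auto|discriminate]).
    set (t1 := tau b1).
    assert (Hgap : 0 <= ell b0 t0 - ell b1 t0) by (specialize (Ha0 b1 Hb1); lra).
    assert (Ht1 : t0 <= t1).
    { unfold t1, tau. assert (0 <= (ell b0 t0 - ell b1 t0) / (s b0 - s b1)) by (apply Rdiv_le_0_compat; lra). lra. }
    assert (Ha1 : active b0 t1).
    { intros b Hb. unfold ell.
      destruct (Rlt_dec (s b) (s b0)) as [Hl|Hl].
      - assert (HbL : In b L0) by (unfold L0; apply filter_In; split; auto; unfold ltb_s; destruct (Rlt_dec (s b) (s b0)); auto; lra).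
        specialize (Hm b HbL). fold t1 in Hm. unfold tau in Hm.
        assert (Hg : ell b t0 <= ell b0 t0) by (apply Ha0; auto).
        assert (t1 - t0 <= (ell b0 t0 - ell b t0) / (s b0 - s b)) by lra.
        assert ((t1 - t0) * (s b0 - s b) <= ell b0 t0 - ell b t0).
        { apply (Rmult_le_compat_r (s b0 - s b)) in H; [|lra]. 
          replace ((ell b0 t0 - ell b t0) / (s b0 - s b) * (s b0 - s b)) with (ell b0 t0 - ell b t0) in H by (field; lra). lra. }
        unfold ell in *. nra.
      - assert (Hg : ell b t0 <= ell b0 t0) by (apply Ha0; auto). unfold ell in *.
        assert ((t1 - t0) * s b0 <= (t1 - t0) * s b) by (apply Rmult_le_compat_l; lra). nra. }
    assert (Heq : ell b1 t1 = ell b0 t1).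
    { unfold t1, tau, ell. field. lra. }
    destruct (Rle_dec (s b1) 0) as [Hn|Hn].
    + exists t1, b0, b1. repeat split; auto; lra.
    + apply (IHk (length (filter (ltb_s (s b1)) Bs))) with (t0 := t1) (b0 := b1); auto.
      * rewrite <- EL in Hlen. eapply Nat.lt_le_trans; [|exact Hlen].
        apply filter_length_lt with (x := b1); auto.
        -- intros y _ Hy. unfold ltb_s in *. destruct (Rlt_dec (s y) (s b1)); [|discriminate]. destruct (Rlt_dec (s y) (s b0)); auto; lra.
        -- unfold ltb_s. destruct (Rlt_dec (s b1) (s b1)); auto; lra.
      * intros b Hb. rewrite Heq. apply Ha1; auto.
      * lra.
Qed.
End OneD.

Lemma oneD (A : Type) (Bs : list A) (al s : A -> R) :
  (forall t, exists b, In b Bs /\ active A Bs al s b t /\ 0 <= ell A al s b t) ->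
  goal1D A Bs al s.
Proof.
  intros H. destruct (H 0) as [b0 [Hb0 [Ha0 _]]].
  destruct (Rtotal_order (s b0) 0) as [Hn|[Hz|Hp]].
  - set (s' := fun b => - s b).
    assert (H' : forall t, exists b, In b Bs /\ active A Bs al s' b t /\ 0 <= ell A al s' b t).
    { intros t. destruct (H (-t)) as [b [Hb [Ha Hp]]]. exists b. split; auto.
      unfold active, ell, s' in *. split. intros b' Hb'. specialize (Ha b' Hb'). lra. lra. }
    assert (Ha0' : active A Bs al s' b0 (-0)).
    { unfold active, ell, s' in *. intros b' Hb'. specialize (Ha0 b' Hb'). lra. }
    destruct (oneD_pos_aux A Bs al s' H' _ (-0) b0 Hb0 Ha0' ltac:(unfold s'; lra) (le_n _))
      as [t [b1 [b2 [Hb1 [Hb2 [Hs1 [Hs2 [Ha Heq]]]]]]]].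
    exists (-t), b2, b1. unfold s', active, ell in *. repeat split; auto; try lra.
    intros b' Hb'. specialize (Ha b' Hb'). lra.
  - exists 0, b0, b0. repeat split; auto; lra.
  - eapply oneD_pos_aux; eauto.
Qed.

Fixpoint spanL (n:nat) (ws : list (nat->R)) (v : nat -> R) : Prop :=
  match ws with
  | nil => forall i, (i < n)%nat -> v i = 0
  | w :: ws' => exists t u, spanL n ws' u /\ forall i, (i < n)%nat -> v i = t * w i + u i
  end.
Definition orthL n ws b := forall w, In w ws -> rdot n b w = 0.
Definition boxv n (b : nat -> R) := forall i, (i < n)%nat -> Rabs (b i) <= 1.
Definition l1 n (e : nat -> R) := Rsum n (fun i => Rabs (e i)).

Lemma rdot_lin n x y z a c : rdot n (fun i => a * x i + c * y i) z = a * rdot n x z + c * rdot n y z.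
Proof. unfold rdot. rewrite <- !Rsum_scal, <- Rsum_add. apply Rsum_ext; intros; ring. Qed.

Lemma rdot_linr n x y z a c : rdot n z (fun i => a * x i + c * y i) = a * rdot n z x + c * rdot n z y.
Proof. unfold rdot. rewrite <- !Rsum_scal, <- Rsum_add. apply Rsum_ext; intros; ring. Qed.

Lemma rdot_ext n x y x' y' : (forall i, (i<n)%nat -> x i = x' i) -> (forall i, (i<n)%nat -> y i = y' i) -> rdot n x y = rdot n x' y'.
Proof. intros H1 H2. unfold rdot. apply Rsum_ext; intros. rewrite H1, H2; auto. Qed.

Lemma rdot_comm n x y : rdot n x y = rdot n y x.
Proof. unfold rdot. apply Rsum_ext; intros; ring. Qed.

Lemma orth_span n ws b v : orthL n ws b -> spanL n ws v -> rdot n b v = 0.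
Proof.
  revert v. induction ws as [|w ws IH]; intros v Ho Hs; simpl in Hs.
  - unfold rdot. apply Rsum_zero. intros. rewrite Hs; auto; ring.
  - destruct Hs as [t [u [Hu Hv]]].
    rewrite (rdot_ext n b v b (fun i => t * w i + 1 * u i)) by (auto; intros; rewrite Hv; auto; ring).
    rewrite rdot_linr. rewrite (Ho w) by (left; auto). rewrite IH; auto. ring.
    intros w' Hw'. apply Ho; right; auto.
Qed.

Lemma weak n b e : boxv n b -> rdot n b e <= l1 n e.
Proof. intros Hb. unfold rdot, l1. apply Rsum_le. intros i Hi.
  specialize (Hb i Hi). eapply Rle_trans. apply Rle_abs. rewrite Rabs_mult.
  generalize (Rabs_pos (e i)); nra. Qed.

Lemma weak_span n ws b v h : boxv n b -> orthL n ws b -> spanL n ws v ->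
  rdot n b h <= l1 n (fun i => h i - v i).
Proof. intros Hb Ho Hs.
  replace (rdot n b h) with (rdot n b (fun i => 1 * (h i - v i) + 1 * v i)).
  rewrite rdot_linr, (orth_span n ws b v) by auto. rewrite Rmult_0_r, Rplus_0_r, Rmult_1_l. apply weak; auto.
  apply rdot_ext; intros; auto; ring. Qed.

Lemma l1_nonneg n e : 0 <= l1 n e.
Proof. apply Rsum_nonneg; intros; apply Rabs_pos. Qed.

Definition upd (f : nat -> R) m x := fun i => if Nat.eqb i m then x else f i.
Fixpoint signs n : list (nat -> R) :=
  match n with 0 => [fun _ => 1] | S m => flat_map (fun f => [upd f m 1; upd f m (-1)]) (signs m) end.

Lemma signs_pm n f : In f (signs n) -> forall i, f i = 1 \/ f i = -1.
Proof. revert f; induction n; simpl; intros f Hf i.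
  - destruct Hf as [<-|[]]; auto.
  - apply in_flat_map in Hf. destruct Hf as [g [Hg Hf]].
    destruct Hf as [<-|[<-|[]]]; unfold upd; destruct (Nat.eqb i n); auto.
Qed.

Lemma signs_h n h : exists f, In f (signs n) /\ forall i, (i < n)%nat -> f i * h i = Rabs (h i).
Proof. induction n.
  - exists (fun _ => 1). split; [left; auto|]. intros; lia.
  - destruct IHn as [f [Hf Hh]].
    exists (upd f n (if Rle_dec 0 (h n) then 1 else -1)). split.
    + simpl. apply in_flat_map. exists f. split; auto. destruct (Rle_dec 0 (h n)); simpl; auto.
    + intros i Hi. unfold upd. destruct (Nat.eqb i n) eqn:E.
      * apply Nat.eqb_eq in E; subst. destruct (Rle_dec 0 (h n)).
        rewrite Rabs_right; lra. rewrite Rabs_left; lra.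
      * apply Nat.eqb_neq in E. apply Hh. lia.
Qed.

Theorem dualityL n ws : exists Bs, (forall b, In b Bs -> boxv n b /\ orthL n ws b) /\
  forall h, exists b v, In b Bs /\ spanL n ws v /\ rdot n b h = l1 n (fun i => h i - v i).
Proof.
  induction ws as [|w ws IH].
  - exists (signs n). split.
    + intros b Hb. split. intros i _. destruct (signs_pm n b Hb i) as [E|E]; rewrite E; unfold Rabs; destruct (Rcase_abs _); lra.
      intros w []. 
    + intros h. destruct (signs_h n h) as [f [Hf Hh]]. exists f, (fun _ => 0). split; auto. split. simpl; auto.
      unfold rdot, l1. apply Rsum_ext. intros. rewrite Hh; auto. f_equal; ring.
  - destruct IH as [Bs [HB HD]].
    set (sl := fun b => rdot n b w).
    set (comb := fun b1 b2 => let lam := - sl b2 / (sl b1 - sl b2) in fun i => lam * b1 i + (1 - lam) * b2 i).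
    set (Bs' := flat_map (fun b1 => if Req_EM_T (sl b1) 0 then [b1] else if Rlt_dec 0 (sl b1) then
               flat_map (fun b2 => if Rlt_dec (sl b2) 0 then [comb b1 b2] else []) Bs else []) Bs).
    assert (Hcomb : forall b1 b2, In b1 Bs -> In b2 Bs -> 0 < sl b1 -> sl b2 < 0 ->
              boxv n (comb b1 b2) /\ orthL n (w :: ws) (comb b1 b2) /\
              forall z, rdot n (comb b1 b2) z = (- sl b2 / (sl b1 - sl b2)) * rdot n b1 z + (1 - (- sl b2 / (sl b1 - sl b2))) * rdot n b2 z).
    { intros b1 b2 H1 H2 Hs1 Hs2.
      assert (Hl0 : 0 <= - sl b2 / (sl b1 - sl b2)) by (apply Rdiv_le_0_compat; lra).
      assert (Hl1 : - sl b2 / (sl b1 - sl b2) <= 1).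
      { apply (Rmult_le_reg_r (sl b1 - sl b2)); [lra|]. unfold Rdiv. rewrite Rmult_assoc, Rinv_l by lra. lra. }
      assert (Hz : forall z, rdot n (comb b1 b2) z = (- sl b2 / (sl b1 - sl b2)) * rdot n b1 z + (1 - (- sl b2 / (sl b1 - sl b2))) * rdot n b2 z).
      { intros z. unfold comb. apply rdot_lin. }
      split; [|split; auto].
      - intros i Hi. unfold comb. destruct (HB b1 H1) as [Hb1 _]. destruct (HB b2 H2) as [Hb2 _].
        specialize (Hb1 i Hi). specialize (Hb2 i Hi).
        eapply Rle_trans. apply Rabs_triang. rewrite !Rabs_mult. rewrite (Rabs_right (- sl b2 / (sl b1 - sl b2))) by lra.
        rewrite (Rabs_right (1 - - sl b2 / (sl b1 - sl b2))) by lra. nra.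
      - intros w' [<-|Hw']; rewrite Hz.
        + fold (sl b1) (sl b2). field. lra.
        + destruct (HB b1 H1) as [_ O1]. destruct (HB b2 H2) as [_ O2]. rewrite O1, O2 by auto. ring. }
    exists Bs'. split.
    + intros b Hb. unfold Bs' in Hb. apply in_flat_map in Hb. destruct Hb as [b1 [Hb1 Hb]].
      destruct (Req_EM_T (sl b1) 0) as [E|E].
      * destruct Hb as [<-|[]]. destruct (HB b1 Hb1) as [Hbx Ho]. split; auto.
        intros w' [<-|Hw']; auto.
      * destruct (Rlt_dec 0 (sl b1)); [|destruct Hb].
        apply in_flat_map in Hb. destruct Hb as [b2 [Hb2 Hb]].
        destruct (Rlt_dec (sl b2) 0); [|destruct Hb]. destruct Hb as [<-|[]].
        destruct (Hcomb b1 b2) as [? [? ?]]; auto.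
    + intros h.
      set (ht := fun t i => h i - t * w i).
      assert (Hell : forall b t, rdot n b (ht t) = rdot n b h - t * sl b).
      { intros b t. unfold ht, sl. rewrite (rdot_ext n b (fun i => h i - t * w i) b (fun i => 1 * h i + (-t) * w i)) by (auto; intros; ring).
        rewrite rdot_linr. ring. }
      assert (Hact : forall t, exists b, In b Bs /\ active (nat->R) Bs (fun b => rdot n b h) sl b t /\ 0 <= ell (nat -> R) (fun b => rdot n b h) sl b t).
      { intros t. destruct (HD (ht t)) as [b [v [Hb [Hv He]]]]. exists b. split; auto.
        unfold active, ell. rewrite <- Hell, He. split; [|apply l1_nonneg].
        intros b' Hb'. rewrite <- Hell. destruct (HB b' Hb'). eapply weak_span; eauto. }
      destruct (oneD _ Bs _ _ Hact) as [t [b1 [b2 [Hb1 [Hb2 [Hs1 [Hs2 [Ha Heq]]]]]]]].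
      destruct (HD (ht t)) as [bt [vt [Hbt [Hvt Het]]]].
      unfold active, ell in Ha, Heq.
      assert (E1 : rdot n b1 h - t * sl b1 = l1 n (fun i => ht t i - vt i)).
      { apply Rle_antisym.
        - rewrite <- Hell. destruct (HB b1 Hb1). eapply weak_span; eauto.
        - rewrite <- Het, Hell. apply Ha; auto. }
      assert (E2 : rdot n b2 h - t * sl b2 = l1 n (fun i => ht t i - vt i)) by lra.
      set (v' := fun i => t * w i + vt i).
      assert (Hv' : spanL n (w :: ws) v') by (simpl; exists t, vt; split; auto).
      assert (Hl : l1 n (fun i => ht t i - vt i) = l1 n (fun i => h i - v' i)).
      { unfold l1. apply Rsum_ext; intros. unfold ht, v'. f_equal; ring. }
      destruct (Req_EM_T (sl b1) 0) as [Z1|Z1].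
      * exists b1, v'. split; [|split; auto].
        -- unfold Bs'. apply in_flat_map. exists b1. split; auto. destruct (Req_EM_T (sl b1) 0); [left; auto|congruence].
        -- rewrite Z1 in E1. lra.
      * destruct (Req_EM_T (sl b2) 0) as [Z2|Z2].
        -- exists b2, v'. split; [|split; auto].
           ++ unfold Bs'. apply in_flat_map. exists b2. split; auto. destruct (Req_EM_T (sl b2) 0); [left; auto|congruence].
           ++ rewrite Z2 in E2. lra.
        -- assert (P1 : 0 < sl b1) by lra. assert (P2 : sl b2 < 0) by lra.
           exists (comb b1 b2), v'. split; [|split; auto].
           ++ unfold Bs'. apply in_flat_map. exists b1. split; auto. destruct (Req_EM_T (sl b1) 0); [congruence|].
              destruct (Rlt_dec 0 (sl b1)); [|lra]. apply in_flat_map. exists b2. split; auto.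
              destruct (Rlt_dec (sl b2) 0); [left; auto|lra].
           ++ destruct (Hcomb b1 b2) as [_ [_ Hz]]; auto. rewrite Hz.
              replace (rdot n b1 h) with (l1 n (fun i => ht t i - vt i) + t * sl b1) by lra.
              replace (rdot n b2 h) with (l1 n (fun i => ht t i - vt i) + t * sl b2) by lra.
              rewrite <- Hl. field. lra.
Qed.

Fixpoint colsF (Cm : nat -> nat -> R) (m : nat) : list (nat -> R) :=
  match m with 0 => nil | S m' => (fun i => Cm i m') :: colsF Cm m' end.

Lemma span_cols n Cm m v : spanL n (colsF Cm m) v -> exists x, forall i, (i < n)%nat -> v i = Rsum m (fun k => Cm i k * x k).
Proof.
  revert v; induction m; simpl; intros v Hv.
  - exists (fun _ => 0). intros; simpl; auto.
  - destruct Hv as [t [u [Hu Hv]]]. destruct (IHm u Hu) as [x Hx].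
    exists (fun k => if Nat.eqb k m then t else x k). intros i Hi. rewrite (Hv i Hi), (Hx i Hi).
    cbn [Rsum]. rewrite Nat.eqb_refl. rewrite (Rsum_ext m (fun k => Cm i k * (if Nat.eqb k m then t else x k)) (fun k => Cm i k * x k)). ring.
    intros k Hk. destruct (Nat.eqb k m) eqn:E; auto. apply Nat.eqb_eq in E; lia.
Qed.

Lemma cols_span n Cm m v x : (forall i, (i < n)%nat -> v i = Rsum m (fun k => Cm i k * x k)) -> spanL n (colsF Cm m) v.
Proof.
  revert v; induction m; simpl; intros v Hv.
  - auto.
  - exists (x m), (fun i => Rsum m (fun k => Cm i k * x k)). split.
    + apply IHm; auto.
    + intros i Hi. rewrite Hv; auto. ring.
Qed.

Lemma orth_inCol N Cm b : orthL N (colsF Cm N) b -> forall w, inCol N Cm w -> rdot N b w = 0.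
Proof. intros Ho w [x Hx]. eapply orth_span; eauto. eapply cols_span; eauto. Qed.

Lemma LP_opt N Cm h : exists m1,
  IsMaxOf (fun y => exists b, Feasible N Cm b /\ y = rdot N b h) m1 /\
  IsMinOf (fun y => exists v, inCol N Cm v /\ y = l1dist N h v) m1 /\
  exists b v, Feasible N Cm b /\ inCol N Cm v /\ rdot N b h = m1 /\ l1dist N h v = m1.
Proof.
  destruct (dualityL N (colsF Cm N)) as [Bs [HB HD]].
  destruct (HD h) as [b [v [Hb [Hv He]]]].
  destruct (HB b Hb) as [Hbx Ho].
  assert (Hf : Feasible N Cm b) by (split; auto; apply orth_inCol; auto).
  assert (Hc : inCol N Cm v) by (apply span_cols in Hv; destruct Hv as [x Hx]; exists x; auto).
  assert (Hweak : forall b' v', Feasible N Cm b' -> inCol N Cm v' -> rdot N b' h <= l1dist N h v').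
  { intros b' v' [Hb1 Hb2] Hv'.
    replace (rdot N b' h) with (rdot N b' (fun i => 1 * (h i - v' i) + 1 * v' i)).
    rewrite rdot_linr, (Hb2 v' Hv'). rewrite Rmult_0_r, Rplus_0_r, Rmult_1_l. apply weak; auto.
    apply rdot_ext; intros; auto; ring. }
  exists (rdot N b h). split; [|split].
  - split. exists b; auto. intros y [b' [Hb' ->]]. rewrite He. apply Hweak; auto.
  - split. exists v; split; auto. intros y [v' [Hv' ->]]. apply Hweak; auto.
  - exists b, v. split; [exact Hf|]. split; [exact Hc|]. split; [reflexivity|]. symmetry; exact He.
Qed.



Lemma complete N (vv : nat -> nat -> R) :
  (forall a b, (a < N)%nat -> (b < N)%nat -> rdot N (vv a) (vv b) = if Nat.eqb a b then 1 else 0) ->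
  forall i j, (i < N)%nat -> (j < N)%nat -> Rsum N (fun a => vv a i * vv a j) = if Nat.eqb i j then 1 else 0.
Proof. exact (Spec.complete_mx N vv). Qed.


Lemma bit_high n k : (k < 2 ^ n)%nat -> Nat.testbit k n = false.
Proof. intros H. apply (Nat.testbit_unique k n false k 0); simpl; lia. Qed.

Lemma bit_top n k : (k < 2 ^ n)%nat -> Nat.testbit (2 ^ n + k) n = true.
Proof. intros H. apply (Nat.testbit_unique _ n true k 0); simpl; lia. Qed.

Lemma bit_low n k j : (k < 2 ^ n)%nat -> (j < n)%nat -> Nat.testbit (2 ^ n + k) j = Nat.testbit k j.
Proof. intros H Hj. rewrite <- (Nat.mod_pow2_bits_low (2 ^ n + k) n j) by auto.
  replace (2 ^ n + k)%nat with (k + 1 * 2 ^ n)%nat by lia. rewrite Nat.Div0.mod_add.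
  rewrite Nat.mod_small; auto. Qed.

Lemma pow2_S n : (2 ^ S n = 2 ^ n + 2 ^ n)%nat.
Proof. rewrite Nat.pow_succ_r'. lia. Qed.

Lemma pow2_pos n : (0 < 2 ^ n)%nat.
Proof. apply Nat.neq_0_lt_0, Nat.pow_nonzero; lia. Qed.

Lemma bit_compl n k j : (k < 2 ^ n)%nat -> (j < n)%nat -> Nat.testbit (2 ^ n - 1 - k) j = negb (Nat.testbit k j).
Proof.
  revert k j. induction n; intros k j Hk Hj; [lia|].
  rewrite pow2_S in *. destruct (Nat.lt_ge_cases k (2 ^ n)) as [Hl|Hl].
  - replace (2 ^ n + 2 ^ n - 1 - k)%nat with (2 ^ n + (2 ^ n - 1 - k))%nat by lia.
    destruct (Nat.eq_dec j n) as [->|Hjn].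
    + rewrite bit_top by lia. rewrite bit_high by auto. auto.
    + rewrite bit_low by lia. apply IHn; lia.
  - replace (2 ^ n + 2 ^ n - 1 - k)%nat with (2 ^ n - 1 - (k - 2 ^ n))%nat by lia.
    replace k with (2 ^ n + (k - 2 ^ n))%nat at 2 by lia.
    destruct (Nat.eq_dec j n) as [->|Hjn].
    + rewrite bit_top by lia. rewrite bit_high by lia. auto.
    + rewrite bit_low by lia. apply IHn; lia.
Qed.

Lemma bit_pattern n (P : nat -> bool) : exists k, (k < 2 ^ n)%nat /\ forall j, (j < n)%nat -> Nat.testbit k j = P j.
Proof.
  induction n.
  - exists 0%nat. simpl. split; [lia|]. intros; lia.
  - destruct IHn as [k [Hk HP]].
    exists ((if P n then 2 ^ n else 0) + k)%nat. rewrite pow2_S. split.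
    + destruct (P n); lia.
    + intros j Hj. destruct (Nat.eq_dec j n) as [->|Hjn].
      * destruct (P n) eqn:E. rewrite bit_top; auto. simpl. apply bit_high; auto.
      * destruct (P n). rewrite bit_low by lia. apply HP; lia. simpl. apply HP; lia.
Qed.

Fixpoint Rprod (n : nat) (f : nat -> R) : R :=
  match n with O => 1 | S m => Rprod m f * f m end.

Lemma Rprod_ext n f g : (forall i, (i < n)%nat -> f i = g i) -> Rprod n f = Rprod n g.
Proof. induction n; simpl; intros H; auto. rewrite IHn by (intros; apply H; lia). rewrite H by lia; auto. Qed.

Lemma Rprod_mul n f g : Rprod n (fun i => f i * g i) = Rprod n f * Rprod n g.
Proof. induction n; simpl; [ring|]. rewrite IHn; ring. Qed.

Lemma Rprod_one n : Rprod n (fun _ => 1) = 1.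
Proof. induction n; simpl; auto. rewrite IHn; ring. Qed.

Lemma Rprod_single n i x : (i < n)%nat -> Rprod n (fun j => if Nat.eqb j i then x else 1) = x.
Proof. induction n; intros Hi; [lia|]. simpl. destruct (Nat.eq_dec i n) as [->|Hin].
  - rewrite Nat.eqb_refl. rewrite (Rprod_ext n _ (fun _ => 1)). rewrite Rprod_one; ring.
    intros j Hj. destruct (Nat.eqb_spec j n); [lia|auto].
  - rewrite IHn by lia. destruct (Nat.eqb_spec n i); [lia|ring].
Qed.

Lemma Rprod_zero n f j : (j < n)%nat -> f j = 0 -> Rprod n f = 0.
Proof. induction n; intros Hj Hf; [lia|]. simpl. destruct (Nat.eq_dec j n) as [->|Hjn].
  - rewrite Hf; ring.
  - rewrite IHn by (auto; lia). ring. Qed.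

Lemma sum_prod n (g : nat -> bool -> R) :
  Rsum (2 ^ n) (fun k => Rprod n (fun j => g j (Nat.testbit k j))) = Rprod n (fun j => g j false + g j true).
Proof.
  induction n.
  - simpl. ring.
  - rewrite pow2_S, Rsum_plus. cbn [Rprod]. rewrite <- IHn.
    rewrite (Rsum_ext (2 ^ n) (fun k => Rprod n (fun j => g j (Nat.testbit k j)) * g n (Nat.testbit k n))
                     (fun k => g n false * Rprod n (fun j => g j (Nat.testbit k j)))).
    2:{ intros k Hk. rewrite bit_high by auto. ring. }
    rewrite (Rsum_ext (2 ^ n) (fun k => Rprod n (fun j => g j (Nat.testbit (2 ^ n + k) j)) * g n (Nat.testbit (2 ^ n + k) n))
                     (fun k => g n true * Rprod n (fun j => g j (Nat.testbit k j)))).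
    2:{ intros k Hk. rewrite bit_top by auto. rewrite (Rprod_ext n _ (fun j => g j (Nat.testbit k j))). ring.
        intros j Hj. rewrite bit_low; auto. }
    rewrite !Rsum_scal. ring.
Qed.

Lemma sum_prod_neg n (g : nat -> bool -> R) :
  Rsum (2 ^ n) (fun k => Rprod n (fun j => g j (negb (Nat.testbit k j)))) =
  Rsum (2 ^ n) (fun k => Rprod n (fun j => g j (Nat.testbit k j))).
Proof.
  rewrite (sum_prod n (fun j b => g j (negb b))), sum_prod. apply Rprod_ext. intros; simpl; ring.
Qed.

Lemma Ceq (a b : C) : fst a = fst b -> snd a = snd b -> a = b.
Proof. destruct a, b; simpl; intros; subst; auto. Qed.

Ltac Csolve := repeat match goal with x : C |- _ => destruct x end;
  unfold Cadd, Cmul, Csub, Copp, Cconj, RtoC, C0, C1, Ci, Cnorm2 in *; simpl; apply Ceq; simpl; ring.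

Lemma C_ring : ring_theory C0 C1 Cadd Cmul Csub Copp (@eq C).
Proof. constructor; intros; Csolve. Qed.
Add Ring Cring : C_ring.

Lemma RtoC_add x y : RtoC (x + y) = Cadd (RtoC x) (RtoC y). Proof. Csolve. Qed.
Lemma RtoC_mul x y : RtoC (x * y) = Cmul (RtoC x) (RtoC y). Proof. Csolve. Qed.
Lemma RtoC_opp x : RtoC (- x) = Copp (RtoC x). Proof. Csolve. Qed.
Lemma RtoC_sub x y : RtoC (x - y) = Csub (RtoC x) (RtoC y). Proof. Csolve. Qed.
Lemma RtoC_0 : RtoC 0 = C0. Proof. Csolve. Qed.
Lemma RtoC_1 : RtoC 1 = C1. Proof. Csolve. Qed.
Lemma Cconj_mul a b : Cconj (Cmul a b) = Cmul (Cconj a) (Cconj b). Proof. Csolve. Qed.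
Lemma Cconj_add a b : Cconj (Cadd a b) = Cadd (Cconj a) (Cconj b). Proof. Csolve. Qed.
Lemma Cconj_RtoC x : Cconj (RtoC x) = RtoC x. Proof. Csolve. Qed.
Lemma Cconj_conj a : Cconj (Cconj a) = a. Proof. Csolve. Qed.
Lemma Cconj_C0 : Cconj C0 = C0. Proof. Csolve. Qed.
Lemma Cmul_conj_self a : Cmul (Cconj a) a = RtoC (Cnorm2 a). Proof. Csolve. Qed.
Lemma Cmul_self_conj a : Cmul a (Cconj a) = RtoC (Cnorm2 a). Proof. Csolve. Qed.
Lemma Cnorm2_mul a b : Cnorm2 (Cmul a b) = Cnorm2 a * Cnorm2 b.
Proof. destruct a, b; unfold Cnorm2, Cmul; simpl; ring. Qed.
Lemma Cnorm2_RtoC x : Cnorm2 (RtoC x) = x * x. Proof. unfold Cnorm2, RtoC; simpl; ring. Qed.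
Lemma Cnorm2_nonneg a : 0 <= Cnorm2 a. Proof. destruct a; unfold Cnorm2; simpl; nra. Qed.

Lemma Csum_ext n f g : (forall i, (i < n)%nat -> f i = g i) -> Csum n f = Csum n g.
Proof. induction n; simpl; intros H; auto. rewrite IHn by (intros; apply H; lia). rewrite H by lia; auto. Qed.
Lemma Csum_add n f g : Csum n (fun i => Cadd (f i) (g i)) = Cadd (Csum n f) (Csum n g).
Proof. induction n; simpl. Csolve. rewrite IHn; ring. Qed.
Lemma Csum_scal n c f : Csum n (fun i => Cmul c (f i)) = Cmul c (Csum n f).
Proof. induction n; simpl. Csolve. rewrite IHn; ring. Qed.
Lemma Csum_scal_r n c f : Csum n (fun i => Cmul (f i) c) = Cmul (Csum n f) c.
Proof. induction n; simpl. Csolve. rewrite IHn; ring. Qed.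
Lemma Csum_zero n f : (forall i, (i < n)%nat -> f i = C0) -> Csum n f = C0.
Proof. induction n; simpl; intros H; auto. rewrite IHn, H by (intros; try apply H; lia). ring. Qed.
Lemma Csum_RtoC n f : Csum n (fun k => RtoC (f k)) = RtoC (Rsum n f).
Proof. induction n; simpl. Csolve. rewrite IHn, RtoC_add; auto. Qed.
Lemma Csum_single n k f : (k < n)%nat -> (forall i, (i < n)%nat -> i <> k -> f i = C0) -> Csum n f = f k.
Proof. induction n; intros Hk H; [lia|]. simpl. destruct (Nat.eq_dec k n).
 - subst. rewrite Csum_zero. ring. intros; apply H; lia.
 - rewrite IHn by (try lia; intros; apply H; lia). rewrite (H n) by lia. ring. Qed.
Lemma Csum_conj n f : Cconj (Csum n f) = Csum n (fun k => Cconj (f k)).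
Proof. induction n; simpl. Csolve. rewrite Cconj_add, IHn; auto. Qed.
Lemma Csum_swap n m f : Csum n (fun i => Csum m (fun j => f i j)) = Csum m (fun j => Csum n (fun i => f i j)).
Proof. induction n; simpl. rewrite Csum_zero; auto. rewrite IHn, <- Csum_add. auto. Qed.

Lemma Cprodn_ext n f g : (forall i, (i < n)%nat -> f i = g i) -> Cprodn n f = Cprodn n g.
Proof. induction n; simpl; intros H; auto. rewrite IHn by (intros; apply H; lia). rewrite H by lia; auto. Qed.
Lemma Cprodn_mul n f g : Cprodn n (fun i => Cmul (f i) (g i)) = Cmul (Cprodn n f) (Cprodn n g).
Proof. induction n; simpl. Csolve. rewrite IHn; ring. Qed.
Lemma Cprodn_conj n f : Cconj (Cprodn n f) = Cprodn n (fun i => Cconj (f i)).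
Proof. induction n; simpl. Csolve. rewrite Cconj_mul, IHn; auto. Qed.
Lemma Cprodn_RtoC n f : Cprodn n (fun i => RtoC (f i)) = RtoC (Rprod n f).
Proof. induction n; simpl. Csolve. rewrite IHn, RtoC_mul; auto. Qed.
Lemma Cnorm2_prod n f : Cnorm2 (Cprodn n f) = Rprod n (fun i => Cnorm2 (f i)).
Proof. induction n; simpl. unfold Cnorm2, C1; simpl; ring. rewrite Cnorm2_mul, IHn; auto. Qed.

Definition sg (b : bool) : R := if b then -1 else 1.
Definition sigk (i k : nat) : R := sg (Nat.testbit k i).
Definition mask1 (i j : nat) (b : bool) : R := if Nat.eqb j i then sg b else 1.

Definition pwt (th : nat -> R) j (b : bool) := if b then sin (th j) ^ 2 else cos (th j) ^ 2.
Definition rwt (th : nat -> R) j (b : bool) := if b then - (cos (th j) * sin (th j)) else cos (th j) * sin (th j).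
Definition pk N th k := Rprod N (fun j => pwt th j (Nat.testbit k j)).
Definition qk N th k := Rprod N (fun j => pwt th j (negb (Nat.testbit k j))).
Definition rk N th k := Rprod N (fun j => rwt th j (Nat.testbit k j)).
Definition Ew N (w d : nat -> R) := Rsum (dim N) (fun k => w k * d k).

Lemma sigk_prod N i k : (i < N)%nat -> sigk i k = Rprod N (fun j => mask1 i j (Nat.testbit k j)).
Proof. intros Hi. unfold sigk, mask1. rewrite <- (Rprod_single N i (sg (Nat.testbit k i))) by auto.
  apply Rprod_ext. intros j Hj. destruct (Nat.eqb_spec j i); subst; auto. Qed.

Lemma sigk_sq i k : sigk i k * sigk i k = 1.
Proof. unfold sigk, sg. destruct (Nat.testbit k i); ring. Qed.

Lemma sum_prod2 N (W M : nat -> bool -> R) :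
  Rsum (dim N) (fun k => Rprod N (fun j => W j (Nat.testbit k j)) * Rprod N (fun j => M j (Nat.testbit k j))) =
  Rprod N (fun j => W j false * M j false + W j true * M j true).
Proof. unfold dim. rewrite <- (sum_prod N (fun j b => W j b * M j b)). apply Rsum_ext; intros. rewrite Rprod_mul; auto. Qed.

Lemma Rprod_two N i l x y : (i < N)%nat -> (l < N)%nat -> i <> l ->
  Rprod N (fun j => if Nat.eqb j i then x else if Nat.eqb j l then y else 1) = x * y.
Proof. intros Hi Hl Hil.
  rewrite (Rprod_ext N _ (fun j => (if Nat.eqb j i then x else 1) * (if Nat.eqb j l then y else 1))).
  rewrite Rprod_mul, !Rprod_single; auto.
  intros j Hj. destruct (Nat.eqb_spec j i), (Nat.eqb_spec j l); subst; try lia; ring. Qed.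

Section Code.
Variable N : nat.
Variable b : nat -> R.
Hypothesis Hb : forall j, (j < N)%nat -> -1 <= b j <= 1.
Let th := fun j => acos (b j) / 2.

Lemma cs1 j : cos (th j) ^ 2 + sin (th j) ^ 2 = 1.
Proof. generalize (sin2_cos2 (th j)). unfold Rsqr. intros; simpl; lra. Qed.
Lemma cs2 j : (j < N)%nat -> cos (th j) ^ 2 - sin (th j) ^ 2 = b j.
Proof. intros Hj. rewrite <- (cos_acos (b j)) by (apply Hb; auto).
  replace (acos (b j)) with (2 * th j) by (unfold th; field). rewrite cos_2a. simpl; ring. Qed.

Lemma Ew_ext w d d' : (forall k, (k < dim N)%nat -> d k = d' k) -> Ew N w d = Ew N w d'.
Proof. intros H. unfold Ew. apply Rsum_ext; intros; rewrite H; auto. Qed.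

Lemma Ew_prod (W M : nat -> bool -> R) :
  Ew N (fun k => Rprod N (fun j => W j (Nat.testbit k j))) (fun k => Rprod N (fun j => M j (Nat.testbit k j))) =
  Rprod N (fun j => W j false * M j false + W j true * M j true).
Proof. apply sum_prod2. Qed.

Lemma one_prod k : 1 = Rprod N (fun j => (fun _ (_ : bool) => 1) j (Nat.testbit k j)).
Proof. rewrite Rprod_one; auto. Qed.

Lemma sig2_prod i l k : (i < N)%nat -> (l < N)%nat -> sigk i k * sigk l k =
   Rprod N (fun j => (fun j b => mask1 i j b * mask1 l j b) j (Nat.testbit k j)).
Proof. intros. cbv beta. rewrite Rprod_mul, <- !sigk_prod; auto. Qed.

Definition pW := pwt th.
Definition qW := fun j b => pwt th j (negb b).
Definition rW := rwt th.

Lemma Ew_one W : Ew N (fun k => Rprod N (fun j => W j (Nat.testbit k j))) (fun _ => 1) =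
  Rprod N (fun j => W j false + W j true).
Proof. rewrite (Ew_ext _ _ (fun k => Rprod N (fun j => (fun _ (_ : bool) => 1) j (Nat.testbit k j)))).
  2:{ intros; cbv beta; rewrite Rprod_one; auto. }
  rewrite (Ew_prod W (fun _ _ => 1)). apply Rprod_ext; intros; ring. Qed.

Lemma Ew_sig W i : (i < N)%nat -> Ew N (fun k => Rprod N (fun j => W j (Nat.testbit k j))) (sigk i) =
  Rprod N (fun j => if Nat.eqb j i then W j false - W j true else W j false + W j true).
Proof. intros Hi. rewrite (Ew_ext _ _ (fun k => Rprod N (fun j => mask1 i j (Nat.testbit k j)))).
  2:{ intros; apply sigk_prod; auto. }
  rewrite (Ew_prod W (mask1 i)). apply Rprod_ext; intros j Hj.
  unfold mask1, sg. destruct (Nat.eqb j i); ring. Qed.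

Lemma Ew_sig2 W i l : (i < N)%nat -> (l < N)%nat -> i <> l ->
  Ew N (fun k => Rprod N (fun j => W j (Nat.testbit k j))) (fun k => sigk i k * sigk l k) =
  Rprod N (fun j => if Nat.eqb j i then W j false - W j true else if Nat.eqb j l then W j false - W j true else W j false + W j true).
Proof. intros Hi Hl Hil. rewrite (Ew_ext _ _ (fun k => Rprod N (fun j => (fun j b => mask1 i j b * mask1 l j b) j (Nat.testbit k j)))).
  2:{ intros; apply sig2_prod; auto. }
  rewrite (Ew_prod W (fun j b => mask1 i j b * mask1 l j b)). apply Rprod_ext; intros j Hj.
  unfold mask1, sg. destruct (Nat.eqb_spec j i), (Nat.eqb_spec j l); subst; try lia; ring. Qed.

Lemma Ep1 : Ew N (pk N th) (fun _ => 1) = 1.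
Proof. unfold pk. etransitivity; [apply (Ew_one pW); auto|]. rewrite <- (Rprod_one N). apply Rprod_ext; intros j _.
  unfold pW, pwt. generalize (cs1 j); lra. Qed.

Lemma Eq1 : Ew N (qk N th) (fun _ => 1) = 1.
Proof. unfold qk. etransitivity; [apply (Ew_one qW); auto|]. rewrite <- (Rprod_one N). apply Rprod_ext; intros j _.
  unfold qW, pwt; simpl. generalize (cs1 j); lra. Qed.

Lemma Epsig i : (i < N)%nat -> Ew N (pk N th) (sigk i) = b i.
Proof. intros Hi. unfold pk. etransitivity; [apply (Ew_sig pW); auto|]. rewrite <- (Rprod_single N i (b i)) by auto.
  apply Rprod_ext; intros j Hj. unfold pW, pwt. destruct (Nat.eqb_spec j i); subst. apply cs2; auto. generalize (cs1 j); lra. Qed.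

Lemma Eqsig i : (i < N)%nat -> Ew N (qk N th) (sigk i) = - b i.
Proof. intros Hi. unfold qk. etransitivity; [apply (Ew_sig qW); auto|]. rewrite <- (Rprod_single N i (- b i)) by auto.
  apply Rprod_ext; intros j Hj. unfold qW, pwt; simpl. destruct (Nat.eqb_spec j i); subst. generalize (cs2 i Hj); lra. generalize (cs1 j); lra. Qed.

Lemma Epsig2 i l : (i < N)%nat -> (l < N)%nat -> i <> l -> Ew N (pk N th) (fun k => sigk i k * sigk l k) = b i * b l.
Proof. intros Hi Hl Hil. unfold pk. etransitivity; [apply (Ew_sig2 pW); auto|]. rewrite <- (Rprod_two N i l (b i) (b l)) by auto.
  apply Rprod_ext; intros j Hj. unfold pW, pwt. destruct (Nat.eqb_spec j i); subst. apply cs2; auto.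
  destruct (Nat.eqb_spec j l); subst. apply cs2; auto. generalize (cs1 j); lra. Qed.

Lemma Eqsig2 i l : (i < N)%nat -> (l < N)%nat -> i <> l -> Ew N (qk N th) (fun k => sigk i k * sigk l k) = b i * b l.
Proof. intros Hi Hl Hil. unfold qk. etransitivity; [apply (Ew_sig2 qW); auto|]. replace (b i * b l) with ((- b i) * (- b l)) by ring.
  rewrite <- (Rprod_two N i l (- b i) (- b l)) by auto.
  apply Rprod_ext; intros j Hj. unfold qW, pwt; simpl. destruct (Nat.eqb_spec j i); subst. generalize (cs2 i Hj); lra.
  destruct (Nat.eqb_spec j l); subst. generalize (cs2 l Hj); lra. generalize (cs1 j); lra. Qed.

Lemma Er1 : (1 <= N)%nat -> Ew N (rk N th) (fun _ => 1) = 0.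
Proof. intros HN. unfold rk. etransitivity; [apply (Ew_one rW); auto|]. apply (Rprod_zero N _ 0%nat); auto. unfold rW, rwt; ring. Qed.

Lemma Ersig i : (2 <= N)%nat -> (i < N)%nat -> Ew N (rk N th) (sigk i) = 0.
Proof. intros HN Hi. unfold rk. etransitivity; [apply (Ew_sig rW); auto|].
  destruct (Nat.eq_dec i 0) as [->|Hi0].
  - apply (Rprod_zero N _ 1%nat); [lia|]. simpl. unfold rW, rwt; ring.
  - apply (Rprod_zero N _ 0%nat); [lia|]. destruct (Nat.eqb_spec 0 i); [lia|]. unfold rW, rwt; ring. Qed.

Lemma Ersig2 i l : (3 <= N)%nat -> (i < N)%nat -> (l < N)%nat -> i <> l -> Ew N (rk N th) (fun k => sigk i k * sigk l k) = 0.
Proof. intros HN Hi Hl Hil. unfold rk. etransitivity; [apply (Ew_sig2 rW); auto|].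
  assert (exists j, (j < N)%nat /\ j <> i /\ j <> l) as [j [Hj [Hji Hjl]]].
  { destruct (Nat.eq_dec i 0), (Nat.eq_dec l 0), (Nat.eq_dec i 1), (Nat.eq_dec l 1);
     first [exists 0%nat; split; lia | exists 1%nat; split; lia | exists 2%nat; split; lia]. }
  apply (Rprod_zero N _ j); auto. destruct (Nat.eqb_spec j i); [lia|]. destruct (Nat.eqb_spec j l); [lia|]. unfold rW, rwt; ring. Qed.

End Code.

Definition zf (th : nat -> R) j (b : bool) : C := if b then Cmul Ci (RtoC (sin (th j))) else RtoC (cos (th j)).
Definition omega (N : nat) : C := Cprodn N (fun _ => Ci).

Lemma zeroL_eq N th k : zeroL N th k = Cprodn N (fun j => zf th j (Nat.testbit k j)).
Proof. reflexivity. Qed.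

Lemma dim_pos N : (0 < dim N)%nat.
Proof. unfold dim. apply pow2_pos. Qed.

Lemma oneL_eq N th k : (k < dim N)%nat -> oneL N th k = Cprodn N (fun j => zf th j (negb (Nat.testbit k j))).
Proof. intros Hk. unfold oneL, opApply.
  rewrite (Csum_single (dim N) (dim N - 1 - k)).
  - unfold Xall. rewrite Nat.eqb_refl. rewrite zeroL_eq.
    transitivity (Cprodn N (fun j => zf th j (Nat.testbit (dim N - 1 - k) j))); [ring|].
    apply Cprodn_ext. intros j Hj. unfold dim in *. rewrite bit_compl; auto.
  - lia.
  - intros i Hi Hne. unfold Xall. destruct (Nat.eqb_spec i (dim N - 1 - k)); [lia|]. ring.
Qed.

Lemma zf_norm th j b : Cnorm2 (zf th j b) = pwt th j b.
Proof. unfold zf, pwt. destruct b; unfold Cnorm2, Cmul, Ci, RtoC; simpl; ring. Qed.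

Lemma zf_cross th j b : Cmul (Cconj (zf th j b)) (zf th j (negb b)) = Cmul Ci (RtoC (rwt th j b)).
Proof. unfold zf, rwt. destruct b; simpl; Csolve. Qed.

Section St.
Variables (N : nat) (th : nat -> R).
Let z := zeroL N th.
Let o := oneL N th.

Lemma Pzz k : Cmul (Cconj (z k)) (z k) = RtoC (pk N th k).
Proof. unfold z. rewrite Cmul_conj_self, zeroL_eq, Cnorm2_prod. unfold pk. f_equal. apply Rprod_ext; intros; apply zf_norm. Qed.

Lemma Poo k : (k < dim N)%nat -> Cmul (Cconj (o k)) (o k) = RtoC (qk N th k).
Proof. intros Hk. unfold o. rewrite Cmul_conj_self, oneL_eq, Cnorm2_prod by auto. unfold qk. f_equal. apply Rprod_ext; intros; apply zf_norm. Qed.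

Lemma Pzo k : (k < dim N)%nat -> Cmul (Cconj (z k)) (o k) = Cmul (omega N) (RtoC (rk N th k)).
Proof. intros Hk. unfold z, o. rewrite oneL_eq, zeroL_eq by auto. rewrite Cprodn_conj, <- Cprodn_mul.
  rewrite (Cprodn_ext N _ (fun j => Cmul Ci (RtoC (rwt th j (Nat.testbit k j))))) by (intros; apply zf_cross).
  rewrite Cprodn_mul, Cprodn_RtoC. reflexivity. Qed.

Lemma Poz k : (k < dim N)%nat -> Cmul (Cconj (o k)) (z k) = Cmul (Cconj (omega N)) (RtoC (rk N th k)).
Proof. intros Hk. transitivity (Cconj (Cmul (Cconj (z k)) (o k))). Csolve.
  rewrite Pzo by auto. rewrite Cconj_mul, Cconj_RtoC. auto. Qed.

Lemma Szz d : Csum (dim N) (fun m => Cmul (RtoC (d m)) (Cmul (Cconj (z m)) (z m))) = RtoC (Ew N (pk N th) d).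
Proof. unfold Ew. rewrite <- Csum_RtoC. apply Csum_ext; intros. rewrite Pzz, RtoC_mul. ring. Qed.
Lemma Soo d : Csum (dim N) (fun m => Cmul (RtoC (d m)) (Cmul (Cconj (o m)) (o m))) = RtoC (Ew N (qk N th) d).
Proof. unfold Ew. rewrite <- Csum_RtoC. apply Csum_ext; intros. rewrite Poo, RtoC_mul by auto. ring. Qed.
Lemma Szo d : Csum (dim N) (fun m => Cmul (RtoC (d m)) (Cmul (Cconj (z m)) (o m))) = Cmul (omega N) (RtoC (Ew N (rk N th) d)).
Proof. unfold Ew. rewrite <- Csum_RtoC, <- Csum_scal. apply Csum_ext; intros. rewrite Pzo, RtoC_mul by auto. ring. Qed.
Lemma Soz d : Csum (dim N) (fun m => Cmul (RtoC (d m)) (Cmul (Cconj (o m)) (z m))) = Cmul (Cconj (omega N)) (RtoC (Ew N (rk N th) d)).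
Proof. unfold Ew. rewrite <- Csum_RtoC, <- Csum_scal. apply Csum_ext; intros. rewrite Poz, RtoC_mul by auto. ring. Qed.
End St.

Definition DiagR N (A : Op) (d : nat -> R) := forall i k, (i < dim N)%nat -> (k < dim N)%nat ->
  A i k = if Nat.eqb i k then RtoC (d i) else C0.

Definition dZ N (v : nat -> R) (k : nat) := Rsum N (fun j => v j * sigk j k).

Lemma if_RtoC_mul (e : bool) c x : Cmul (RtoC c) (if e then RtoC x else C0) = if e then RtoC (c * x) else C0.
Proof. destruct e; [rewrite RtoC_mul|]; ring. Qed.

Lemma Csum_if n (e : bool) f : Csum n (fun a => if e then RtoC (f a) else C0) = if e then RtoC (Rsum n f) else C0.
Proof. destruct e. apply Csum_RtoC. apply Csum_zero; auto. Qed.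

Lemma diag_dotZ N v : DiagR N (dotZ N v) (dZ N v).
Proof. intros i k Hi Hk. unfold dotZ, PauliZ, dZ.
  rewrite (Csum_ext N _ (fun j => if Nat.eqb i k then RtoC (v j * sigk j i) else C0)).
  apply Csum_if.
  intros j Hj. destruct (Nat.eqb i k); [|ring]. unfold sigk, sg. destruct (Nat.testbit i j); rewrite RtoC_mul; [ring|]. rewrite RtoC_1; ring. Qed.

Lemma diag_scale N c A d : DiagR N A d -> DiagR N (opScale (RtoC c) A) (fun k => c * d k).
Proof. intros H i k Hi Hk. unfold opScale. rewrite H by auto. apply if_RtoC_mul. Qed.

Lemma diag_sub N A B dA dB : DiagR N A dA -> DiagR N B dB -> DiagR N (opSub A B) (fun k => dA k - dB k).
Proof. intros HA HB i k Hi Hk. unfold opSub. rewrite HA, HB by auto. destruct (Nat.eqb i k); [rewrite RtoC_sub|]; ring. Qed.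

Lemma diag_mul N A B dA dB : DiagR N A dA -> DiagR N B dB -> DiagR N (opMul N A B) (fun k => dA k * dB k).
Proof. intros HA HB i k Hi Hk. unfold opMul.
  rewrite (Csum_single (dim N) i); auto.
  2:{ intros m Hm Hne. rewrite HA by auto. destruct (Nat.eqb_spec i m); [lia|ring]. }
  rewrite HA, HB by auto. rewrite Nat.eqb_refl. destruct (Nat.eqb_spec i k); [subst; rewrite RtoC_mul|]; ring. Qed.

Lemma diag_id N : DiagR N opId (fun _ => 1).
Proof. intros i k _ _. unfold opId. destruct (Nat.eqb i k); [rewrite RtoC_1|]; auto. Qed.

Definition dL N (lam : nat -> R) (vv : nat -> nat -> R) a k := sqrt (lam a) * dZ N (vv a) k.
Definition dS N lam vv c0 (c1 : nat -> R) (c2 : nat -> nat -> R) k :=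
  c0 * 1 + Rsum N (fun a => c1 a * dL N lam vv a k) + Rsum N (fun a => Rsum N (fun b => c2 a b * (dL N lam vv a k * dL N lam vv b k))).

Lemma diag_Lind N lam vv a : DiagR N (Lind N lam vv a) (dL N lam vv a).
Proof. unfold Lind, dL. apply diag_scale, diag_dotZ. Qed.

Lemma diag_span N lam vv c0 c1 c2 : DiagR N (spanElt N lam vv c0 c1 c2) (dS N lam vv c0 c1 c2).
Proof. intros i k Hi Hk. unfold spanElt, dS.
  rewrite (diag_id N i k) by auto.
  rewrite (Csum_ext N (fun a => Cmul (RtoC (c1 a)) (Lind N lam vv a i k)) (fun a => if Nat.eqb i k then RtoC (c1 a * dL N lam vv a i) else C0))
    by (intros; rewrite diag_Lind by auto; apply if_RtoC_mul).
  rewrite (Csum_ext N (fun a => Csum N (fun b => Cmul (RtoC (c2 a b)) (opMul N (Lind N lam vv a) (Lind N lam vv b) i k)))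
     (fun a => if Nat.eqb i k then RtoC (Rsum N (fun b => c2 a b * (dL N lam vv a i * dL N lam vv b i))) else C0)).
  2:{ intros a Ha. rewrite <- Csum_if. apply Csum_ext. intros b' Hb'.
      rewrite (diag_mul N _ _ _ _ (diag_Lind N lam vv a) (diag_Lind N lam vv b')) by auto. apply if_RtoC_mul. }
  rewrite !Csum_if. destruct (Nat.eqb i k); [rewrite !RtoC_add, RtoC_mul|]; ring. Qed.

Lemma diag_H N h : DiagR N (Hmain N h) (fun k => 1 / 2 * dZ N h k).
Proof. unfold Hmain. apply diag_scale, diag_dotZ. Qed.

Lemma opApply_diag N A d v k : DiagR N A d -> (k < dim N)%nat -> opApply N A v k = Cmul (RtoC (d k)) (v k).
Proof. intros H Hk. unfold opApply. rewrite (Csum_single (dim N) k).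
  rewrite H, Nat.eqb_refl by auto. auto. auto.
  intros m Hm Hne. rewrite H by auto. destruct (Nat.eqb_spec k m); [lia|ring]. Qed.

Lemma braket_diag N A d u v : DiagR N A d ->
  braket N u A v = Csum (dim N) (fun k => Cmul (RtoC (d k)) (Cmul (Cconj (u k)) (v k))).
Proof. intros H. unfold braket, inner. apply Csum_ext; intros. rewrite (opApply_diag N A d) by auto. ring. Qed.

Lemma Ew_ext' N w d d' : (forall k, (k < dim N)%nat -> d k = d' k) -> Ew N w d = Ew N w d'.
Proof. intros H. unfold Ew. apply Rsum_ext; intros; rewrite H; auto. Qed.
Lemma Ew_lin N w a c d1 d2 : Ew N w (fun k => a * d1 k + c * d2 k) = a * Ew N w d1 + c * Ew N w d2.
Proof. unfold Ew. rewrite <- !Rsum_scal, <- Rsum_add. apply Rsum_ext; intros; ring. Qed.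
Lemma Ew_scal N w a d : Ew N w (fun k => a * d k) = a * Ew N w d.
Proof. unfold Ew. rewrite <- !Rsum_scal. apply Rsum_ext; intros; ring. Qed.
Lemma Ew_sum N w n f : Ew N w (fun k => Rsum n (fun a => f a k)) = Rsum n (fun a => Ew N w (f a)).
Proof. unfold Ew. rewrite <- Rsum_swap. apply Rsum_ext; intros. rewrite <- Rsum_scal. auto. Qed.
Lemma Ew_wsub N w1 w2 d : Ew N (fun k => w1 k - w2 k) d = Ew N w1 d - Ew N w2 d.
Proof. unfold Ew. rewrite <- Rsum_sub. apply Rsum_ext; intros; ring. Qed.
Lemma Rsum_prod n m f g : Rsum n f * Rsum m g = Rsum n (fun j => Rsum m (fun l => f j * g l)).
Proof. induction n; simpl. ring. rewrite <- IHn, Rsum_scal. ring. Qed.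

Lemma Ew_dZ N w v : Ew N w (dZ N v) = Rsum N (fun j => v j * Ew N w (sigk j)).
Proof. unfold dZ. rewrite Ew_sum. apply Rsum_ext; intros. apply Ew_scal. Qed.

Lemma Ew_dZ2 N w u v : Ew N w (fun k => dZ N u k * dZ N v k) =
  Rsum N (fun j => Rsum N (fun l => u j * v l * Ew N w (fun k => sigk j k * sigk l k))).
Proof. unfold dZ. rewrite (Ew_ext' N w _ (fun k => Rsum N (fun j => Rsum N (fun l => u j * v l * (sigk j k * sigk l k))))).
  2:{ intros. rewrite Rsum_prod. apply Rsum_ext; intros; apply Rsum_ext; intros; ring. }
  rewrite Ew_sum. apply Rsum_ext; intros. rewrite Ew_sum. apply Rsum_ext; intros. apply Ew_scal. Qed.

Lemma Ew_dS N w lam vv c0 c1 c2 : Ew N w (dS N lam vv c0 c1 c2) =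
  c0 * Ew N w (fun _ => 1) + Rsum N (fun a => c1 a * sqrt (lam a) * Ew N w (dZ N (vv a))) +
  Rsum N (fun a => Rsum N (fun b => c2 a b * (sqrt (lam a) * sqrt (lam b)) * Ew N w (fun k => dZ N (vv a) k * dZ N (vv b) k))).
Proof. unfold dS.
  rewrite (Ew_ext' N w _ (fun k => 1 * (c0 * 1 + Rsum N (fun a => c1 a * dL N lam vv a k)) +
      1 * Rsum N (fun a => Rsum N (fun b => c2 a b * (dL N lam vv a k * dL N lam vv b k))))) by (intros; ring).
  rewrite Ew_lin.
  rewrite (Ew_ext' N w (fun k => c0 * 1 + Rsum N (fun a => c1 a * dL N lam vv a k)) (fun k => c0 * 1 + 1 * Rsum N (fun a => c1 a * dL N lam vv a k))) by (intros; ring).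
  rewrite Ew_lin, !Ew_sum. rewrite !Rmult_1_l.
  apply f_equal2; [apply f_equal2; [reflexivity|]|].
  - apply Rsum_ext; intros. unfold dL.
    rewrite (Ew_ext' N w _ (fun k => (c1 i * sqrt (lam i)) * dZ N (vv i) k)) by (intros; ring). apply Ew_scal.
  - apply Rsum_ext; intros. rewrite Ew_sum. apply Rsum_ext; intros. unfold dL.
    rewrite (Ew_ext' N w _ (fun k => (c2 i i0 * (sqrt (lam i) * sqrt (lam i0))) * (dZ N (vv i) k * dZ N (vv i0) k))) by (intros; ring).
    apply Ew_scal.
Qed.

Lemma Ew_dS_zero N w lam vv c0 c1 c2 :
  Ew N w (fun _ => 1) = 0 ->
  (forall j l, (j < N)%nat -> (l < N)%nat -> Ew N w (fun k => sigk j k * sigk l k) = 0) ->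
  (forall a, (a < N)%nat -> sqrt (lam a) * Ew N w (dZ N (vv a)) = 0) ->
  Ew N w (dS N lam vv c0 c1 c2) = 0.
Proof. intros H1 H2 H3. rewrite Ew_dS, H1.
  rewrite (Rsum_zero N (fun a => c1 a * sqrt (lam a) * Ew N w (dZ N (vv a)))).
  rewrite (Rsum_zero N (fun a => Rsum N (fun b => _))). ring.
  - intros a Ha. apply Rsum_zero. intros b' Hb'. rewrite Ew_dZ2.
    rewrite (Rsum_zero N (fun j => Rsum N (fun l => _))). ring.
    intros j Hj. apply Rsum_zero. intros l Hl. rewrite H2 by auto. ring.
  - intros a Ha. rewrite Rmult_assoc, H3; auto. ring.
Qed.

Lemma PDP N th D d i k : DiagR N D d -> (i < dim N)%nat -> (k < dim N)%nat ->
  opMul N (opMul N (projP N th) D) (projP N th) i k =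
  Cadd (Cadd (Cmul (Cmul (zeroL N th i) (Cconj (zeroL N th k))) (RtoC (Ew N (pk N th) d)))
             (Cmul (Cmul (zeroL N th i) (Cconj (oneL N th k))) (Cmul (omega N) (RtoC (Ew N (rk N th) d)))))
       (Cadd (Cmul (Cmul (oneL N th i) (Cconj (zeroL N th k))) (Cmul (Cconj (omega N)) (RtoC (Ew N (rk N th) d))))
             (Cmul (Cmul (oneL N th i) (Cconj (oneL N th k))) (RtoC (Ew N (qk N th) d)))).
Proof. intros HD Hi Hk. unfold opMul at 1.
  set (z := zeroL N th). set (o := oneL N th).
  rewrite (Csum_ext (dim N) _ (fun m => Cadd (Cadd (Cmul (Cmul (z i) (Cconj (z k))) (Cmul (RtoC (d m)) (Cmul (Cconj (z m)) (z m))))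
                                                   (Cmul (Cmul (z i) (Cconj (o k))) (Cmul (RtoC (d m)) (Cmul (Cconj (z m)) (o m)))))
                                             (Cadd (Cmul (Cmul (o i) (Cconj (z k))) (Cmul (RtoC (d m)) (Cmul (Cconj (o m)) (z m))))
                                                   (Cmul (Cmul (o i) (Cconj (o k))) (Cmul (RtoC (d m)) (Cmul (Cconj (o m)) (o m))))))).
  2:{ intros m Hm. unfold opMul. rewrite (Csum_single (dim N) m); auto.
      - rewrite HD, Nat.eqb_refl by auto. unfold projP. fold z o. ring.
      - intros n Hn Hne. rewrite HD by auto. destruct (Nat.eqb_spec n m); [lia|ring]. }
  rewrite !Csum_add, !Csum_scal. unfold z, o. rewrite Szz, Szo, Soz, Soo. reflexivity. Qed.

Section Code2.
Variable N : nat.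
Hypothesis HN : (3 <= N)%nat.
Variable b : nat -> R.
Hypothesis Hb : forall j, (j < N)%nat -> -1 <= b j <= 1.
Local Notation th := (fun j => acos (b j) / 2).
Local Notation wD := (fun k => pk N th k - qk N th k).

Lemma ED1 : Ew N wD (fun _ => 1) = 0.
Proof. rewrite Ew_wsub, Ep1, Eq1; auto. ring. Qed.
Lemma EDs j : (j < N)%nat -> Ew N wD (sigk j) = 2 * b j.
Proof. intros Hj. rewrite Ew_wsub, Epsig, Eqsig; auto. ring. Qed.
Lemma EDss j l : (j < N)%nat -> (l < N)%nat -> Ew N wD (fun k => sigk j k * sigk l k) = 0.
Proof. intros Hj Hl. destruct (Nat.eq_dec j l) as [->|Hjl].
  - rewrite (Ew_ext' N wD _ (fun _ => 1)) by (intros; apply sigk_sq). apply ED1.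
  - rewrite Ew_wsub, Epsig2, Eqsig2; auto. ring. Qed.
Lemma Erss j l : (j < N)%nat -> (l < N)%nat -> Ew N (rk N th) (fun k => sigk j k * sigk l k) = 0.
Proof. intros Hj Hl. destruct (Nat.eq_dec j l) as [->|Hjl].
  - rewrite (Ew_ext' N _ _ (fun _ => 1)) by (intros; apply sigk_sq). apply Er1; auto; lia.
  - apply Ersig2; auto. Qed.
Lemma Er_dZ v : Ew N (rk N th) (dZ N v) = 0.
Proof. rewrite Ew_dZ. apply Rsum_zero. intros j Hj. rewrite Ersig by (auto; lia). ring. Qed.
Lemma ED_dZ v : Ew N wD (dZ N v) = 2 * rdot N v b.
Proof. rewrite Ew_dZ. unfold rdot. rewrite <- Rsum_scal. apply Rsum_ext; intros. rewrite EDs by auto. ring. Qed.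

Lemma Er_dS lam vv c0 c1 c2 : Ew N (rk N th) (dS N lam vv c0 c1 c2) = 0.
Proof. apply Ew_dS_zero. apply Er1; lia. apply Erss. intros; rewrite Er_dZ; ring. Qed.

Lemma ED_dS lam vv c0 c1 c2 : (forall a, (a < N)%nat -> sqrt (lam a) * rdot N (vv a) b = 0) ->
  Ew N wD (dS N lam vv c0 c1 c2) = 0.
Proof. intros H. apply Ew_dS_zero. apply ED1. apply EDss. intros a Ha. rewrite ED_dZ.
  replace (sqrt (lam a) * (2 * rdot N (vv a) b)) with (2 * (sqrt (lam a) * rdot N (vv a) b)) by ring. rewrite H; auto; ring. Qed.

Lemma KL lam vv c0 c1 c2 : (forall a, (a < N)%nat -> sqrt (lam a) * rdot N (vv a) b = 0) ->
  forall i k, (i < dim N)%nat -> (k < dim N)%nat ->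
  opMul N (opMul N (projP N th) (spanElt N lam vv c0 c1 c2)) (projP N th) i k =
  Cmul (RtoC (Ew N (pk N th) (dS N lam vv c0 c1 c2))) (projP N th i k).
Proof. intros H i k Hi Hk. rewrite (PDP N th _ _ i k (diag_span N lam vv c0 c1 c2)) by auto.
  rewrite Er_dS. assert (E := ED_dS lam vv c0 c1 c2 H). rewrite Ew_wsub in E.
  replace (Ew N (qk N th) (dS N lam vv c0 c1 c2)) with (Ew N (pk N th) (dS N lam vv c0 c1 c2)) by lra.
  rewrite RtoC_0. unfold projP. ring. Qed.

Lemma H01 h : braket N (zeroL N th) (Hmain N h) (oneL N th) = C0.
Proof. rewrite (braket_diag N _ _ _ _ (diag_H N h)), Szo.
  rewrite Ew_scal, Er_dZ. rewrite Rmult_0_r, RtoC_0. ring. Qed.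
Lemma H10 h : braket N (oneL N th) (Hmain N h) (zeroL N th) = C0.
Proof. rewrite (braket_diag N _ _ _ _ (diag_H N h)), Soz.
  rewrite Ew_scal, Er_dZ. rewrite Rmult_0_r, RtoC_0. ring. Qed.

Lemma Hdiff h : Csub (braket N (zeroL N th) (Hmain N h) (zeroL N th)) (braket N (oneL N th) (Hmain N h) (oneL N th)) = RtoC (rdot N h b).
Proof. rewrite !(braket_diag N _ _ _ _ (diag_H N h)), Szz, Soo. rewrite <- RtoC_sub.
  f_equal. rewrite <- Ew_wsub. rewrite Ew_scal, ED_dZ. field. Qed.
End Code2.

Section Q.
Variables (N : nat) (th : nat -> R).
Local Notation z := (zeroL N th).
Local Notation o := (oneL N th).
Hypothesis Izz : Csum (dim N) (fun m => Cmul (Cconj (z m)) (z m)) = C1.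
Hypothesis Ioo : Csum (dim N) (fun m => Cmul (Cconj (o m)) (o m)) = C1.
Hypothesis Izo : Csum (dim N) (fun m => Cmul (Cconj (z m)) (o m)) = C0.
Hypothesis Ioz : Csum (dim N) (fun m => Cmul (Cconj (o m)) (z m)) = C0.

Definition Rk (al be : C) i k := Cadd (Cmul al (Cmul (z i) (Cconj (z k)))) (Cmul be (Cmul (o i) (Cconj (o k)))).

Lemma RkRk K al be i k : (forall i k, (i < dim N)%nat -> (k < dim N)%nat -> K i k = Rk al be i k) ->
  (i < dim N)%nat -> (k < dim N)%nat -> opMul N K K i k = Rk (Cmul al al) (Cmul be be) i k.
Proof. intros HK Hi Hk. unfold opMul.
  rewrite (Csum_ext (dim N) _ (fun m => Cadd (Cadd (Cmul (Cmul (Cmul al al) (Cmul (z i) (Cconj (z k)))) (Cmul (Cconj (z m)) (z m)))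
                                                   (Cmul (Cmul (Cmul al be) (Cmul (z i) (Cconj (o k)))) (Cmul (Cconj (z m)) (o m))))
                                             (Cadd (Cmul (Cmul (Cmul be al) (Cmul (o i) (Cconj (z k)))) (Cmul (Cconj (o m)) (z m)))
                                                   (Cmul (Cmul (Cmul be be) (Cmul (o i) (Cconj (o k)))) (Cmul (Cconj (o m)) (o m)))))).
  2:{ intros m Hm. rewrite !HK by auto. unfold Rk. ring. }
  rewrite !Csum_add, !Csum_scal, Izz, Ioo, Izo, Ioz. unfold Rk. ring. Qed.

Definition s2 := RtoC (1 / sqrt 2).
Lemma s2s2 : Cmul s2 s2 = RtoC (1 / 2).
Proof. unfold s2. rewrite <- RtoC_mul. f_equal. assert (H := sqrt_sqrt 2 ltac:(lra)).
  assert (0 < sqrt 2) by (apply sqrt_lt_R0; lra).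
  replace (1 / sqrt 2 * (1 / sqrt 2)) with (1 / (sqrt 2 * sqrt 2)) by (field; lra). rewrite H. auto. Qed.

Lemma plusL_eq k : plusL N th k = Cmul s2 (Cadd (z k) (o k)).
Proof. reflexivity. Qed.

Lemma braket_Rk K al be : (forall i k, (i < dim N)%nat -> (k < dim N)%nat -> K i k = Rk al be i k) ->
  braket N (plusL N th) K (plusL N th) = Cmul (RtoC (1/2)) (Cadd al be).
Proof. intros HK. unfold braket, inner, opApply.
  rewrite (Csum_ext (dim N) _ (fun i => Cmul (Cconj (plusL N th i))
     (Cadd (Cmul (Cmul al (z i)) (Cmul s2 (Cadd (Csum (dim N) (fun m => Cmul (Cconj (z m)) (z m))) (Csum (dim N) (fun m => Cmul (Cconj (z m)) (o m))))))
           (Cmul (Cmul be (o i)) (Cmul s2 (Cadd (Csum (dim N) (fun m => Cmul (Cconj (o m)) (z m))) (Csum (dim N) (fun m => Cmul (Cconj (o m)) (o m))))))))).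
  2:{ intros i Hi. f_equal. rewrite <- !Csum_add, <- !Csum_scal, <- Csum_add. apply Csum_ext. intros m Hm.
      rewrite HK by auto. unfold Rk. rewrite plusL_eq. ring. }
  rewrite Izz, Ioo, Izo, Ioz.
  rewrite (Csum_ext (dim N) _ (fun i => Cadd (Cmul (Cmul (Cmul al s2) s2) (Cadd (Cmul (Cconj (z i)) (z i)) (Cmul (Cconj (o i)) (z i))))
                                           (Cmul (Cmul (Cmul be s2) s2) (Cadd (Cmul (Cconj (z i)) (o i)) (Cmul (Cconj (o i)) (o i)))))).
  2:{ intros i Hi. rewrite plusL_eq, Cconj_mul, Cconj_add. unfold s2 at 1. rewrite Cconj_RtoC. fold s2. ring. }
  rewrite Csum_add, !Csum_scal, !Csum_add, Izz, Ioo, Izo, Ioz.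
  transitivity (Cmul (Cmul s2 s2) (Cadd al be)); [ring|]. rewrite s2s2. auto. Qed.
End Q.

Lemma Cnorm2_diag_apply c x : Cnorm2 (Cmul (RtoC c) x) = c * c * Cnorm2 x.
Proof. rewrite Cnorm2_mul, Cnorm2_RtoC. auto. Qed.

Lemma vnorm_apply N A d psi : DiagR N A d ->
  vnorm N (opApply N A psi) = sqrt (Rsum (dim N) (fun k => d k * d k * Cnorm2 (psi k))).
Proof. intros H. unfold vnorm. f_equal. apply Rsum_ext. intros. rewrite (opApply_diag N A d) by auto. apply Cnorm2_diag_apply. Qed.

Lemma vnorm_unit N psi : vnorm N psi = 1 -> Rsum (dim N) (fun k => Cnorm2 (psi k)) = 1.
Proof. unfold vnorm. intros H. rewrite <- sqrt_1 in H. apply sqrt_inj in H; auto; [|lra].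
  apply Rsum_nonneg; intros; apply Cnorm2_nonneg. Qed.

Lemma OpNorm_lower N A d y psi : DiagR N A d -> OpNorm N A y ->
  Rsum (dim N) (fun k => Cnorm2 (psi k)) = 1 ->
  Rabs (Rsum (dim N) (fun k => Cnorm2 (psi k) * d k)) <= y.
Proof. intros HD [Hub _] Hp.
  assert (Hv : vnorm N psi = 1) by (unfold vnorm; rewrite Hp; apply sqrt_1).
  assert (Hy := Hub _ (ex_intro _ psi (conj Hv eq_refl))).
  rewrite (vnorm_apply N A d) in Hy by auto.
  set (m := Rsum (dim N) (fun k => Cnorm2 (psi k) * d k)) in *.
  assert (Hq : 0 <= Rsum (dim N) (fun k => Cnorm2 (psi k) * ((d k - m) * (d k - m)))).
  { apply Rsum_nonneg; intros. apply Rmult_le_pos. apply Cnorm2_nonneg. apply Rle_0_sqr. }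
  assert (E : Rsum (dim N) (fun k => Cnorm2 (psi k) * ((d k - m) * (d k - m))) =
     Rsum (dim N) (fun k => d k * d k * Cnorm2 (psi k)) - 2 * m * m + m * m * Rsum (dim N) (fun k => Cnorm2 (psi k))).
  { rewrite (Rsum_ext _ _ (fun k => (d k * d k * Cnorm2 (psi k) + (-2*m) * (Cnorm2 (psi k) * d k)) + (m*m) * Cnorm2 (psi k))) by (intros; ring).
    rewrite !Rsum_add, !Rsum_scal. unfold m. ring. }
  rewrite Hp in E.
  eapply Rle_trans; [|exact Hy].
  rewrite <- sqrt_Rsqr_abs. apply sqrt_le_1_alt. unfold Rsqr. lra. Qed.

Lemma OpNorm_diag N A d k0 : DiagR N A d -> (k0 < dim N)%nat ->
  (forall k, (k < dim N)%nat -> Rabs (d k) <= Rabs (d k0)) -> OpNorm N A (Rabs (d k0)).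
Proof. intros HD Hk0 Hmax. split.
  - intros y [psi [Hv ->]]. rewrite (vnorm_apply N A d) by auto.
    apply vnorm_unit in Hv.
    rewrite <- (sqrt_Rsqr (Rabs (d k0))) by apply Rabs_pos. apply sqrt_le_1_alt.
    replace (Rabs (d k0))² with (Rabs (d k0) * Rabs (d k0) * 1) by (unfold Rsqr; ring). rewrite <- Hv, <- Rsum_scal.
    apply Rsum_le. intros k Hk. apply Rmult_le_compat_r. apply Cnorm2_nonneg.
    specialize (Hmax k Hk).
    assert (E : Rabs (d k) * Rabs (d k) = d k * d k) by (rewrite <- Rabs_mult; apply Rabs_right; nra).
    generalize (Rabs_pos (d k)); intros. nra.
  - intros y Hub. apply Hub.
    exists (fun k => if Nat.eqb k k0 then C1 else C0). split.
    + unfold vnorm. rewrite (Rsum_single (dim N) k0); [| exact Hk0 | intros i Hi Hne; destruct (Nat.eqb_spec i k0); [lia|]; unfold Cnorm2, C0; simpl; ring].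
      rewrite Nat.eqb_refl. unfold Cnorm2, C1; simpl. replace (1 * (1 * 1) + 0 * (0 * 1)) with 1 by ring. apply sqrt_1.
    + rewrite (vnorm_apply N A d) by auto.
      rewrite (Rsum_single (dim N) k0); [| exact Hk0 | intros i Hi Hne; destruct (Nat.eqb_spec i k0); [lia|]; unfold Cnorm2, C0; simpl; ring].
      rewrite Nat.eqb_refl. unfold Cnorm2, C1; simpl. replace (d k0 * d k0 * (1 * (1 * 1) + 0 * (0 * 1))) with (d k0)² by (unfold Rsqr; ring).
      symmetry. apply sqrt_Rsqr_abs.
Qed.

Section Fin.
Variable N : nat.
Hypothesis HN : (3 <= N)%nat.
Variable b : nat -> R.
Hypothesis Hb : forall j, (j < N)%nat -> -1 <= b j <= 1.
Local Notation th := (fun j => acos (b j) / 2).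

Lemma Izz : Csum (dim N) (fun m => Cmul (Cconj (zeroL N th m)) (zeroL N th m)) = C1.
Proof. rewrite <- RtoC_1, <- (Ep1 N b), <- Szz. apply Csum_ext; intros. rewrite RtoC_1; ring. Qed.
Lemma Ioo : Csum (dim N) (fun m => Cmul (Cconj (oneL N th m)) (oneL N th m)) = C1.
Proof. rewrite <- RtoC_1, <- (Eq1 N b), <- Soo. apply Csum_ext; intros. rewrite RtoC_1; ring. Qed.
Lemma Izo : Csum (dim N) (fun m => Cmul (Cconj (zeroL N th m)) (oneL N th m)) = C0.
Proof. transitivity (Cmul (omega N) (RtoC (Ew N (rk N th) (fun _ => 1)))).
  rewrite <- Szo. apply Csum_ext; intros. rewrite RtoC_1; ring.
  rewrite Er1 by (auto; lia). rewrite RtoC_0; ring. Qed.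
Lemma Ioz : Csum (dim N) (fun m => Cmul (Cconj (oneL N th m)) (zeroL N th m)) = C0.
Proof. transitivity (Cmul (Cconj (omega N)) (RtoC (Ew N (rk N th) (fun _ => 1)))).
  rewrite <- Soz. apply Csum_ext; intros. rewrite RtoC_1; ring.
  rewrite Er1 by (auto; lia). rewrite RtoC_0; ring. Qed.

Lemma QFI_main h t : QFI N t (opMul N (opMul N (projP N th) (Hmain N h)) (projP N th)) (plusL N th) =
  RtoC (t ^ 2 * rdot N h b ^ 2).
Proof.
  set (x0 := Ew N (pk N th) (fun k => 1 / 2 * dZ N h k)).
  set (x1 := Ew N (qk N th) (fun k => 1 / 2 * dZ N h k)).
  set (K := opMul N (opMul N (projP N th) (Hmain N h)) (projP N th)).
  assert (Er0 : Ew N (rk N th) (fun k => 1 / 2 * dZ N h k) = 0) by (rewrite Ew_scal, Er_dZ; auto; ring).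
  assert (HK : forall i k, (i < dim N)%nat -> (k < dim N)%nat -> K i k = Rk N th (RtoC x0) (RtoC x1) i k).
  { intros i k Hi Hk. unfold K. rewrite (PDP N th _ _ i k (diag_H N h)) by auto. rewrite Er0, RtoC_0.
    unfold Rk. fold x0 x1. ring. }
  assert (HKK : forall i k, (i < dim N)%nat -> (k < dim N)%nat -> opMul N K K i k = Rk N th (Cmul (RtoC x0) (RtoC x0)) (Cmul (RtoC x1) (RtoC x1)) i k).
  { intros i k Hi Hk. apply RkRk; auto using Izz, Ioo, Izo, Ioz. }
  assert (E : x0 - x1 = rdot N h b).
  { unfold x0, x1. rewrite <- Ew_wsub, Ew_scal, ED_dZ; auto. field. }
  unfold QFI. rewrite (braket_Rk N th Izz Ioo Izo Ioz _ _ _ HKK), (braket_Rk N th Izz Ioo Izo Ioz _ _ _ HK).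
  rewrite <- E. unfold RtoC, Cmul, Csub, Cadd, Copp; simpl. apply Ceq; simpl; field.
Qed.

Lemma Cnorm2_z k : Cnorm2 (zeroL N th k) = pk N th k.
Proof. rewrite zeroL_eq, Cnorm2_prod. unfold pk. apply Rprod_ext; intros; apply zf_norm. Qed.
Lemma Cnorm2_o k : (k < dim N)%nat -> Cnorm2 (oneL N th k) = qk N th k.
Proof. intros Hk. rewrite oneL_eq, Cnorm2_prod by auto. unfold qk. apply Rprod_ext; intros; apply zf_norm. Qed.

Lemma lower_bound h lam vv c0 c1 c2 y :
  (forall a, (a < N)%nat -> sqrt (lam a) * rdot N (vv a) b = 0) ->
  OpNorm N (opSub (Hmain N h) (spanElt N lam vv c0 c1 c2)) y -> rdot N h b / 2 <= y.
Proof. intros Hc Hy.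
  assert (HD := diag_sub N _ _ _ _ (diag_H N h) (diag_span N lam vv c0 c1 c2)).
  set (dA := fun k => 1 / 2 * dZ N h k - dS N lam vv c0 c1 c2 k) in HD.
  assert (Y1 := OpNorm_lower N _ dA y (zeroL N th) HD Hy).
  assert (Y2 := OpNorm_lower N _ dA y (oneL N th) HD Hy).
  rewrite (Rsum_ext _ (fun k => Cnorm2 (zeroL N th k)) (fun k => pk N th k * 1)) in Y1 by (intros; rewrite Cnorm2_z; ring).
  rewrite (Rsum_ext _ (fun k => Cnorm2 (oneL N th k)) (fun k => qk N th k * 1)) in Y2 by (intros; rewrite Cnorm2_o by auto; ring).
  rewrite (Rsum_ext _ (fun k => Cnorm2 (zeroL N th k) * dA k) (fun k => pk N th k * dA k)) in Y1 by (intros; rewrite Cnorm2_z; ring).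
  rewrite (Rsum_ext _ (fun k => Cnorm2 (oneL N th k) * dA k) (fun k => qk N th k * dA k)) in Y2 by (intros; rewrite Cnorm2_o by auto; ring).
  fold (Ew N (pk N th) (fun _ => 1)) (Ew N (qk N th) (fun _ => 1)) (Ew N (pk N th) dA) (Ew N (qk N th) dA) in Y1, Y2.
  rewrite Ep1 in Y1 by auto. rewrite Eq1 in Y2 by auto.
  specialize (Y1 eq_refl). specialize (Y2 eq_refl).
  assert (E : Ew N (pk N th) dA - Ew N (qk N th) dA = rdot N h b).
  { rewrite <- Ew_wsub. unfold dA.
    rewrite (Ew_ext' N _ _ (fun k => (1/2) * dZ N h k + (-1) * dS N lam vv c0 c1 c2 k)) by (intros; ring).
    rewrite Ew_lin, ED_dZ, ED_dS; auto. field. }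
  generalize (Rle_abs (Ew N (pk N th) dA)) (Rle_abs (- Ew N (qk N th) dA)). rewrite Rabs_Ropp. lra.
Qed.
End Fin.

Lemma l1_zero n e : Rsum n (fun i => Rabs (e i)) = 0 -> forall i, (i < n)%nat -> e i = 0.
Proof. induction n; intros H i Hi; [lia|]. simpl in H.
  assert (0 <= Rsum n (fun i => Rabs (e i))) by (apply Rsum_nonneg; intros; apply Rabs_pos).
  assert (0 <= Rabs (e n)) by apply Rabs_pos.
  destruct (Nat.eq_dec i n) as [->|Hin].
  - destruct (Rcase_abs (e n)); [rewrite Rabs_left in * by auto|rewrite Rabs_right in * by auto]; lra.
  - apply IHn; [lra|lia]. Qed.

Lemma box_between N b : (forall i, (i < N)%nat -> Rabs (b i) <= 1) -> forall j, (j < N)%nat -> -1 <= b j <= 1.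
Proof. intros H j Hj. specialize (H j Hj). split; [generalize (Rle_abs (- b j)); rewrite Rabs_Ropp | generalize (Rle_abs (b j))]; lra. Qed.

Lemma spec_id N Cm lam vv x
  (vorth : forall a b, (a < N)%nat -> (b < N)%nat -> rdot N (vv a) (vv b) = if Nat.eqb a b then 1 else 0)
  (veig : forall a i, (a < N)%nat -> (i < N)%nat -> Rsum N (fun k => Cm i k * vv a k) = lam a * vv a i)
  j : (j < N)%nat ->
  Rsum N (fun a => lam a * rdot N (vv a) x * vv a j) = Rsum N (fun k => Cm j k * x k).
Proof. intros Hj.
  rewrite (Rsum_ext N _ (fun a => Rsum N (fun k => Rsum N (fun m => vv a k * x k * (Cm j m * vv a m))))).
  2:{ intros a Ha. rewrite <- Rsum_prod. rewrite veig by auto. unfold rdot. ring. }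
  rewrite Rsum_swap.
  rewrite (Rsum_ext N _ (fun k => Rsum N (fun m => x k * Cm j m * Rsum N (fun a => vv a k * vv a m)))).
  2:{ intros k Hk. rewrite Rsum_swap. apply Rsum_ext. intros m Hm. rewrite <- Rsum_scal. apply Rsum_ext; intros; ring. }
  apply Rsum_ext. intros k Hk. rewrite (Rsum_single N k); auto.
  - rewrite complete by auto. rewrite Nat.eqb_refl. ring.
  - intros m Hm Hne. rewrite complete by auto. destruct (Nat.eqb_spec k m); [lia|ring].
Qed.

Lemma dS_star N Cm lam vv x vs
  (vorth : forall a b, (a < N)%nat -> (b < N)%nat -> rdot N (vv a) (vv b) = if Nat.eqb a b then 1 else 0)
  (veig : forall a i, (a < N)%nat -> (i < N)%nat -> Rsum N (fun k => Cm i k * vv a k) = lam a * vv a i)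
  (lampos : forall a, (a < N)%nat -> 0 <= lam a)
  (Hx : forall i, (i < N)%nat -> vs i = Rsum N (fun k => Cm i k * x k)) k :
  dS N lam vv 0 (fun a => sqrt (lam a) * rdot N (vv a) x / 2) (fun _ _ => 0) k = 1 / 2 * dZ N vs k.
Proof. unfold dS, dL, dZ.
  cbv beta.
  assert (Z : forall f : nat -> nat -> R, Rsum N (fun a => Rsum N (fun b => 0 * f a b)) = 0).
  { intros f. apply Rsum_zero; intros; apply Rsum_zero; intros; ring. }
  rewrite Z.
  rewrite (Rsum_ext N _ (fun a => Rsum N (fun j => (1/2) * (lam a * rdot N (vv a) x * vv a j * sigk j k)))).
  2:{ intros a Ha. rewrite <- !Rsum_scal. apply Rsum_ext; intros j Hj.
      assert (Hs := sqrt_sqrt (lam a) (lampos a Ha)). set (r := sqrt (lam a)) in *.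
      rewrite <- Hs. field. }
  rewrite Rsum_swap. rewrite Rmult_0_l, Rplus_0_r, Rplus_0_l.
  rewrite <- Rsum_scal. apply Rsum_ext. intros j Hj. rewrite Rsum_scal.
  rewrite Hx by auto. rewrite <- (spec_id N Cm lam vv x vorth veig j Hj).
  f_equal. rewrite Rmult_comm, <- Rsum_scal. apply Rsum_ext; intros; ring.
Qed.

Theorem mainTheorem5 (N : nat) (hN : (3 <= N)%nat)
  (h : nat -> R) (Cm : nat -> nat -> R) (lam : nat -> R) (vv : nat -> nat -> R)
  (Csym : forall i j, (i < N)%nat -> (j < N)%nat -> Cm i j = Cm j i)
  (Cpsd : forall x : nat -> R, 0 <= Rsum N (fun i => Rsum N (fun k => x i * Cm i k * x k)))
  (vorth : forall a b, (a < N)%nat -> (b < N)%nat ->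
     rdot N (vv a) (vv b) = if Nat.eqb a b then 1 else 0)
  (veig : forall a i, (a < N)%nat -> (i < N)%nat ->
     Rsum N (fun k => Cm i k * vv a k) = lam a * vv a i)
  (lampos : forall a, (a < N)%nat -> 0 <= lam a)
  (hnot : ~ inCol N Cm h) :
  exists m1 m2 : R,
    IsMaxOf (fun y => exists b, Feasible N Cm b /\ y = rdot N b h) m1 /\
    IsMinOf (fun y => exists v, inCol N Cm v /\ y = l1dist N h v) m1 /\
    IsMinOf (fun y => exists S, InSpan N lam vv S /\ OpNorm N (opSub (Hmain N h) S) y) m2 /\
    m1 = 2 * m2 /\
    (forall b : nat -> R, Feasible N Cm b ->
       (forall b', Feasible N Cm b' -> rdot N b' h <= rdot N b h) ->
       let theta := fun j => acos (b j) / 2 in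
       let P := projP N theta in
       (forall S, InSpan N lam vv S -> exists c : R, forall i k,
            (i < dim N)%nat -> (k < dim N)%nat ->
            opMul N (opMul N P S) P i k = Cmul (RtoC c) (P i k)) /\
       braket N (zeroL N theta) (Hmain N h) (oneL N theta) = C0 /\
       Csub (braket N (zeroL N theta) (Hmain N h) (zeroL N theta))
            (braket N (oneL N theta) (Hmain N h) (oneL N theta)) = RtoC (rdot N h b) /\
       rdot N h b = m1 /\ 0 < m1 /\
       (forall t : R,
          QFI N t (opMul N (opMul N P (Hmain N h)) P) (plusL N theta) = RtoC (t ^ 2 * m1 ^ 2) /\
          QFI N t (opMul N (opMul N P (Hmain N h)) P) (plusL N theta) = RtoC (4 * t ^ 2 * m2 ^ 2))).
Proof.
  destruct (LP_opt N Cm h) as [m1 [HMax [HMin [bs [vs [Hfs [Hcs [Ebs Evs]]]]]]]].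
  assert (Hm1pos : 0 < m1).
  { assert (0 <= m1) by (rewrite <- Evs; apply Rsum_nonneg; intros; apply Rabs_pos).
    destruct (Rle_lt_or_eq_dec 0 m1 H) as [|E]; auto. exfalso. apply hnot.
    destruct Hcs as [x Hx]. exists x. intros i Hi. rewrite <- Hx by auto.
    rewrite <- E in Evs. assert (Z := l1_zero N (fun i => h i - vs i) Evs i Hi). simpl in Z. lra. }
  assert (Hsq : forall b, Feasible N Cm b -> forall a, (a < N)%nat -> sqrt (lam a) * rdot N (vv a) b = 0).
  { intros b [_ Hb] a Ha. destruct (Rle_lt_or_eq_dec 0 (lam a) (lampos a Ha)) as [Hp|E].
    - rewrite rdot_comm, Hb. ring. exists (fun k => vv a k / lam a). intros i Hi.
      rewrite (Rsum_ext N _ (fun k => / lam a * (Cm i k * vv a k))) by (intros; unfold Rdiv; ring).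
      rewrite Rsum_scal, veig by auto. field. lra.
    - rewrite <- E, sqrt_0. ring. }
  assert (Hbs : forall j, (j < N)%nat -> -1 <= bs j <= 1) by (apply box_between; apply Hfs).
  exists m1, (m1 / 2).
  split; [exact HMax|]. split; [exact HMin|]. split; [|split; [field|]].
  - split.
    + destruct Hcs as [x Hx].
      set (c1 := fun a => sqrt (lam a) * rdot N (vv a) x / 2).
      exists (spanElt N lam vv 0 c1 (fun _ _ => 0)). split; [exists 0, c1, (fun _ _ => 0); reflexivity|].
      assert (HD := diag_sub N _ _ _ _ (diag_H N h) (diag_span N lam vv 0 c1 (fun _ _ => 0))).
      set (dA := fun k => 1 / 2 * dZ N h k - dS N lam vv 0 c1 (fun _ _ => 0) k) in HD.
      set (e := fun j => h j - vs j).
      assert (Hd : forall k, dA k = 1 / 2 * Rsum N (fun j => e j * sigk j k)).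
      { intros k. unfold dA, c1. rewrite (dS_star N Cm lam vv x vs) by auto. unfold dZ, e.
        rewrite <- Rmult_minus_distr_l, <- Rsum_sub. f_equal. apply Rsum_ext; intros; ring. }
      destruct (bit_pattern N (fun j => if Rlt_dec (e j) 0 then true else false)) as [k0 [Hk0 Hbits]].
      assert (Hval : dA k0 = m1 / 2).
      { rewrite Hd, <- Evs. unfold l1dist.
        rewrite (Rsum_ext N (fun j => e j * sigk j k0) (fun j => Rabs (h j - vs j))). field.
        intros j Hj. unfold sigk. rewrite Hbits by auto. unfold sg, e.
        destruct (Rlt_dec (h j - vs j) 0). rewrite Rabs_left by auto; ring. rewrite Rabs_right by lra; ring. }
      replace (m1 / 2) with (Rabs (dA k0)) by (rewrite Hval; apply Rabs_right; lra).
      apply OpNorm_diag; auto.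
      intros k Hk. rewrite Hval, (Rabs_right (m1 / 2)) by lra. rewrite Hd, Rabs_mult, (Rabs_right (1 / 2)) by lra.
      rewrite <- Evs. replace (l1dist N h vs / 2) with (1 / 2 * l1dist N h vs) by field. apply Rmult_le_compat_l; [lra|]. eapply Rle_trans; [apply Rsum_abs|].
      unfold l1dist. apply Rsum_le. intros j Hj. rewrite Rabs_mult. unfold sigk, sg, e.
      replace (Rabs (if Nat.testbit k j then -1 else 1)) with 1 by (destruct (Nat.testbit k j); unfold Rabs; destruct (Rcase_abs _); lra). lra.
    + intros y [S [[c0 [c1 [c2 ->]]] Hy]].
      assert (L : rdot N h bs / 2 <= y) by (eapply lower_bound; eauto).
      rewrite rdot_comm, Ebs in L. exact L.
  - intros b Hf Hopt. cbv zeta.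
    assert (Hbb : forall j, (j < N)%nat -> -1 <= b j <= 1) by (apply box_between; apply Hf).
    assert (Ehb : rdot N h b = m1).
    { rewrite rdot_comm. apply Rle_antisym.
      - apply HMax. exists b; auto.
      - rewrite <- Ebs. apply Hopt; auto. }
    refine (conj _ (conj _ (conj _ (conj Ehb (conj Hm1pos _))))).
    + intros S [c0 [c1 [c2 ->]]]. eexists. intros i k Hi Hk.
      apply KL; auto.
    + apply H01; auto.
    + apply Hdiff; auto.
    + intros t. rewrite QFI_main, Ehb by auto. split; f_equal; field.
Qed.
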